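(* Let the data $\eta,Q_g,\Psi,c_{max},\theta_s$ be as in the context, and let the pyrolysis heat $Q_p$ satisfy $-Q_g<Q_p<0$. Then there exists exactly one $c\in[c_{max},0]$ for which the interface problem (P$_c$) described in the context admits a solution $\theta$.
   Context: Dimensionless travelling-wave formulation of a solid-propellant combustion model ($x<0$ inert solid, $x>0$ gas, interface at $x=0$; $\theta$ dimensionless temperature; $c<0$ dimensionless regression velocity). Data: $\eta>0$; gas reaction heat $Q_g>0$; pyrolysis heat $Q_p\in\mathbb R$; $\Psi:[0,1]\to[0,\infty)$ of class $C^\infty$ with $\Psi(\theta)>0$ for $\theta\in[0,1)$ and $\Psi(1)=0$; a number $c_{max}<0$ and a surface-temperature map $\theta_s:[c_{max},0]\to[0,1]$ (inverse of a pyrolysis law with cut-off at the initial temperature) that is continuous and strictly decreasing with $\theta_s(0)=0$, $\theta_s(c_{max})=1$, and $C^\infty$ on $[c_{max},0)$ with $\theta_s'(c)<0$ there. Define $S(c):=\eta\,\frac{Q_p}{Q_p+Q_g}\,c$. For $c\in[c_{max},0]$, problem (P$_c$) asks for $\theta:\mathbb R\to[0,1]$, continuous, of class $C^2$ on $(-\infty,0]$ and on $[0,\infty)$ (one-sided derivatives at $0$), such that $\theta''+c\theta'=0$ for $x<0$; $\theta''+\eta c\theta'=-\Psi(\theta)$ for $x>0$; $\theta(x)\to0$ as $x\to-\infty$, $\theta(0)=\theta_s(c)$, $\theta(x)\to1$ as $x\to+\infty$, $\theta'(x)\to0$ as $x\to\pm\infty$; and the interface heat balance $\theta'(0^+)-\eta\,\theta'(0^-)=S(c)$.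 *)

(* Defs.v *)
From Stdlib Require Import Reals.
From Coquelicot Require Import Coquelicot.
Open Scope R_scope.

Definition smooth (f : R -> R) : Prop :=
  forall (n : nat) (x : R), ex_derive_n f n x.

Definition smooth_neg (f : R -> R) : Prop :=
  forall (n : nat) (x : R), x < 0 -> ex_derive_n f n x.

Definition C2 (f : R -> R) : Prop :=
  forall x : R, ex_derive f x /\ ex_derive (Derive f) x /\
                continuous (Derive (Derive f)) x.

Definition continuous_on_closed (f : R -> R) (a b : R) : Prop :=
  forall x, a <= x <= b -> forall eps : R, 0 < eps ->
    exists delta : R, 0 < delta /\
      forall y, a <= y <= b -> Rabs (y - x) < delta -> Rabs (f y - f x) < eps.

Definition strictly_decreasing_on (f : R -> R) (a b : R) : Prop :=
  forall x y, a <= x <= b -> a <= y <= b -> x < y -> f y < f x.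

Definition S_heat (eta Qg Qp c : R) : R := eta * (Qp / (Qp + Qg)) * c.

(* A function that is C^2 on (-oo,0] (resp. [0,+oo)) with
   one-sided derivatives at 0 is represented as the restriction of a C^2
   function thm (resp. thp) on R; theta'(0^-) = Derive thm 0,
   theta'(0^+) = Derive thp 0. *)
Definition Pc_solution (eta Qg Qp : R) (Psi : R -> R) (theta_s : R -> R)
    (c : R) (theta : R -> R) : Prop :=
  (forall x, 0 <= theta x <= 1) /\
  (forall x, continuous theta x) /\
  exists thm thp : R -> R,
    C2 thm /\ C2 thp /\
    (forall x, x <= 0 -> thm x = theta x) /\
    (forall x, 0 <= x -> thp x = theta x) /\
    (forall x, x < 0 -> Derive (Derive thm) x + c * Derive thm x = 0) /\
    (forall x, 0 < x ->
        Derive (Derive thp) x + eta * c * Derive thp x = - Psi (theta x)) /\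
    is_lim theta m_infty 0 /\
    theta 0 = theta_s c /\
    is_lim theta p_infty 1 /\
    is_lim (Derive thm) m_infty 0 /\
    is_lim (Derive thp) p_infty 0 /\
    Derive thp 0 - eta * Derive thm 0 = S_heat eta Qg Qp c.

Definition Pc_solvable (eta Qg Qp : R) (Psi theta_s : R -> R) (c : R) : Prop :=
  exists theta : R -> R, Pc_solution eta Qg Qp Psi theta_s c theta.

(* Main.v *)
Require Import Defs.
From Stdlib Require Import Reals Lra Psatz Classical FunctionalExtensionality ClassicalEpsilon Ranalysis5 Factorial.
From Coquelicot Require Import Coquelicot.
Open Scope R_scope.


Lemma der_cont g dg x : is_derive g x dg -> continuity_pt g x.
Proof.
  intro H. apply continuity_pt_filterlim. apply (ex_derive_continuous g).
  exists dg; exact H.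
Qed.

Lemma mvt_open (g dg : R -> R) u v : u < v ->
  (forall x, u <= x <= v -> is_derive g x (dg x)) ->
  exists c, u < c < v /\ g v - g u = dg c * (v - u).
Proof.
  intros Huv Hd.
  destruct (MVT_cor2 g dg u v Huv) as [c [E Hc]].
  - intros x Hx. apply is_derive_Reals. apply Hd; lra.
  - exists c; split; auto.
Qed.

Lemma mono_deriv (g dg : R -> R) u v : u <= v ->
  (forall x, u <= x <= v -> is_derive g x (dg x)) ->
  (forall x, u < x < v -> 0 <= dg x) -> g u <= g v.
Proof.
  intros Huv Hd Hs.
  destruct (Req_dec u v) as [->|Hne]; [lra|].
  destruct (mvt_open g dg u v) as [c [Hc E]]; try lra; auto.
  assert (0 <= dg c) by (apply Hs; lra). nra.
Qed.

Lemma smono_deriv (g dg : R -> R) u v : u < v ->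
  (forall x, u <= x <= v -> is_derive g x (dg x)) ->
  (forall x, u < x < v -> 0 < dg x) -> g u < g v.
Proof.
  intros Huv Hd Hs.
  destruct (mvt_open g dg u v) as [c [Hc E]]; try lra; auto.
  assert (0 < dg c) by (apply Hs; lra). nra.
Qed.

Lemma anti_deriv (g dg : R -> R) u v : u <= v ->
  (forall x, u <= x <= v -> is_derive g x (dg x)) ->
  (forall x, u < x < v -> dg x <= 0) -> g v <= g u.
Proof.
  intros Huv Hd Hs.
  assert (- g u <= - g v); [|lra].
  apply (mono_deriv (fun x => - g x) (fun x => - dg x)); auto.
  - intros x Hx. apply (is_derive_opp g). auto.
  - intros x Hx. specialize (Hs x Hx). lra.
Qed.

Lemma santi_deriv (g dg : R -> R) u v : u < v ->
  (forall x, u <= x <= v -> is_derive g x (dg x)) ->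
  (forall x, u < x < v -> dg x < 0) -> g v < g u.
Proof.
  intros Huv Hd Hs.
  assert (- g u < - g v); [|lra].
  apply (smono_deriv (fun x => - g x) (fun x => - dg x)); auto.
  - intros x Hx. apply (is_derive_opp g). auto.
  - intros x Hx. specialize (Hs x Hx). lra.
Qed.


Lemma lim_p_elim f l : is_lim f p_infty (Finite l) ->
  forall eps, 0 < eps -> exists M, forall x, M < x -> Rabs (f x - l) < eps.
Proof.
  intros H eps Heps.
  destruct (proj1 (filterlim_locally f l) H (mkposreal eps Heps)) as [M HM].
  exists M. intros x Hx. apply HM. exact Hx.
Qed.

Lemma lim_p_intro f l :
  (forall eps, 0 < eps -> exists M, forall x, M < x -> Rabs (f x - l) < eps) ->
  is_lim f p_infty (Finite l).
Proof.
  intros H. apply (proj2 (filterlim_locally f l)). intros eps.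
  destruct (H eps (cond_pos eps)) as [M HM]. exists M. intros x Hx. apply HM; auto.
Qed.

Lemma lim_m_elim f l : is_lim f m_infty (Finite l) ->
  forall eps, 0 < eps -> exists M, forall x, x < M -> Rabs (f x - l) < eps.
Proof.
  intros H eps Heps.
  destruct (proj1 (filterlim_locally f l) H (mkposreal eps Heps)) as [M HM].
  exists M. intros x Hx. apply HM. exact Hx.
Qed.

Lemma lim_m_intro f l :
  (forall eps, 0 < eps -> exists M, forall x, x < M -> Rabs (f x - l) < eps) ->
  is_lim f m_infty (Finite l).
Proof.
  intros H. apply (proj2 (filterlim_locally f l)). intros eps.
  destruct (H eps (cond_pos eps)) as [M HM]. exists M. intros x Hx. apply HM; auto.
Qed.


Lemma first_fail (Q : R -> Prop) (x1 : R) : 0 <= x1 -> Q 0 -> ~ Q x1 ->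
  (forall x, 0 <= x -> Q x -> exists d, 0 < d /\ forall y, x <= y < x + d -> Q y) ->
  exists x0, 0 < x0 <= x1 /\ (forall y, 0 <= y < x0 -> Q y) /\ ~ Q x0.
Proof.
  intros Hx1 HQ0 HQ1 Hop.
  set (E := fun x => 0 <= x <= x1 /\ forall y, 0 <= y <= x -> Q y).
  assert (HB : bound E). { exists x1. intros x [Hx _]. lra. }
  assert (HE : exists x, E x). { exists 0. split; [lra|]. intros y Hy. replace y with 0 by lra. auto. }
  destruct (completeness E HB HE) as [s [Hub Hlub]].
  assert (Hs0 : 0 <= s). { apply Hub. split; [lra|]. intros y Hy. replace y with 0 by lra. auto. }
  assert (Hs1 : s <= x1). { apply Hlub. intros x [Hx _]. lra. }
  assert (Hbel : forall y, 0 <= y < s -> Q y).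
  { intros y Hy. destruct (classic (exists e, E e /\ y < e)) as [[e [[He1 He2] Hye]]|Hn].
    - apply He2; lra.
    - exfalso. assert (s <= y); [|lra]. apply Hlub. intros e He.
      destruct (Rle_dec e y); auto. exfalso; apply Hn; exists e; split; auto; lra. }
  assert (HnQ : ~ Q s).
  { intros HQs. destruct (Hop s Hs0 HQs) as [d [Hd Hd']].
    destruct (Req_dec s x1) as [<-|Hne]; [contradiction|].
    set (t := Rmin (s + d/2) x1).
    assert (E t).
    { split. unfold t; split; [apply Rmin_glb; lra| apply Rmin_r].
      intros y Hy. destruct (Rlt_dec y s). apply Hbel; lra. apply Hd'.
      split. lra. assert (t <= s + d/2) by apply Rmin_l. lra. }
    assert (t <= s) by (apply Hub; auto).
    assert (s < t) by (unfold t; apply Rmin_glb_lt; lra). lra. }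
  exists s. split; [|split; auto].
  split; auto. destruct (Req_dec s 0) as [->|]; [contradiction|lra].
Qed.

Lemma left_ge (g : R -> R) x d v : continuity_pt g x -> 0 < d ->
  (forall y, x - d < y < x -> v < g y) -> v <= g x.
Proof.
  intros Hc Hd H. destruct (Rle_dec v (g x)) as [|Hn]; auto. exfalso.
  destruct (Hc (v - g x)) as [a [Ha Ha']]. lra.
  set (y := x - Rmin a d / 2).
  assert (0 < Rmin a d) by (apply Rmin_glb_lt; lra).
  assert (Rmin a d <= a) by apply Rmin_l. assert (Rmin a d <= d) by apply Rmin_r.
  specialize (Ha' y). specialize (H y).
  assert (Hvy : v < g y) by (apply H; unfold y; lra).
  assert (Habs : Rabs (g y - g x) < v - g x).
  { apply Ha'. split. unfold D_x, no_cond; split; auto. unfold y; lra.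
    simpl. unfold R_dist, y. rewrite Rabs_left by lra. lra. }
  apply Rabs_def2 in Habs. lra.
Qed.

Lemma deriv_pos_left g x d d0 : is_derive g x d -> 0 < d -> 0 < d0 ->
  exists y, x - d0 < y < x /\ g y < g x.
Proof.
  intros Hd Hpos Hd0. apply is_derive_Reals in Hd.
  destruct (Hd (d/2)) as [del Hdel]. lra.
  set (h := - Rmin del d0 / 2).
  assert (0 < Rmin del d0) by (apply Rmin_glb_lt; [apply cond_pos|lra]).
  assert (Rmin del d0 <= del) by apply Rmin_l. assert (Rmin del d0 <= d0) by apply Rmin_r.
  specialize (Hdel h). exists (x + h). 
  assert (Habs : Rabs ((g (x + h) - g x) / h - d) < d / 2).
  { apply Hdel. unfold h; lra. unfold h. rewrite Rabs_left by lra. lra. }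
  apply Rabs_def2 in Habs. split. unfold h; lra.
  assert (0 < (g (x + h) - g x) / h) by lra.
  assert (h < 0) by (unfold h; lra).
  assert ((g (x + h) - g x) / h * h = g (x + h) - g x) by (field; lra).
  nra.
Qed.


Lemma cont_gt g x v : continuity_pt g x -> v < g x ->
  exists d, 0 < d /\ forall y, Rabs (y - x) < d -> v < g y.
Proof.
  intros Hc Hv. destruct (Hc (g x - v)) as [a [Ha Ha']]. lra.
  exists a. split; auto. intros y Hy.
  destruct (Req_dec y x) as [->|Hne]; [lra|].
  assert (Habs : Rabs (g y - g x) < g x - v).
  { apply Ha'. split. split. exact I. auto. simpl; exact Hy. }
  apply Rabs_def2 in Habs. lra.
Qed.

Lemma cont_lt g x v : continuity_pt g x -> g x < v ->
  exists d, 0 < d /\ forall y, Rabs (y - x) < d -> g y < v.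
Proof.
  intros Hc Hv. destruct (Hc (v - g x)) as [a [Ha Ha']]. lra.
  exists a. split; auto. intros y Hy.
  destruct (Req_dec y x) as [->|Hne]; [lra|].
  assert (Habs : Rabs (g y - g x) < v - g x).
  { apply Ha'. split. split. exact I. auto. simpl; exact Hy. }
  apply Rabs_def2 in Habs. lra.
Qed.

Lemma stay_pos (W dW : R -> R) :
  (forall x, 0 <= x -> is_derive W x (dW x)) ->
  (forall x, 0 <= x -> 0 < W x -> 0 < dW x) -> 0 < W 0 ->
  forall x, 0 <= x -> W 0 <= W x.
Proof.
  intros Hd Hpos H0 x1 Hx1.
  destruct (Rle_dec (W 0) (W x1)) as [|Hn]; auto. exfalso.
  set (v := Rmax ((W 0 + W x1)/2) (W 0 / 2)).
  assert (Hv1 : (W 0 + W x1)/2 <= v) by apply Rmax_l.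
  assert (Hv2 : W 0 / 2 <= v) by apply Rmax_r.
  assert (Hv3 : v < W 0). { unfold v; apply Rmax_lub_lt; lra. }
  destruct (first_fail (fun y => v < W y) x1) as [x0 [Hx0 [Hb Hn0]]]; auto; try lra.
  - intros x Hx Hvx.
    destruct (cont_gt W x v) as [d [Hd0 Hd1]]; auto.
    apply (der_cont _ (dW x)); auto.
    exists d; split; auto. intros y Hy. apply Hd1. rewrite Rabs_right; lra.
  - assert (Hge : v <= W x0).
    { apply (left_ge W x0 x0 v); [apply (der_cont _ (dW x0)); apply Hd; lra|lra|].
      intros y Hy; apply Hb; lra. }
    assert (HW : W x0 = v) by lra.
    assert (0 < dW x0) by (apply Hpos; lra).
    destruct (deriv_pos_left W x0 (dW x0) x0) as [y [Hy1 Hy2]]; auto; try lra.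
    apply Hd; lra.
    assert (v < W y) by (apply Hb; lra). lra.
Qed.

Lemma eq_side_cont g h x0 (s : R) : s <> 0 -> continuity_pt g x0 -> continuity_pt h x0 ->
  (forall t, 0 < t -> g (x0 + s * t) = h (x0 + s * t)) -> g x0 = h x0.
Proof.
  intros Hs Hg Hh E. destruct (Req_dec (g x0) (h x0)) as [|Hne]; auto. exfalso.
  set (e := Rabs (g x0 - h x0) / 2).
  assert (He : 0 < e) by (unfold e; assert (0 < Rabs (g x0 - h x0)) by (apply Rabs_pos_lt; lra); lra).
  destruct (Hg e He) as [a [Ha Ha']]. destruct (Hh e He) as [b [Hb Hb']].
  set (t := Rmin a b / (2 * Rabs s)).
  assert (Has : 0 < Rabs s) by (apply Rabs_pos_lt; auto).
  assert (Hm : 0 < Rmin a b) by (apply Rmin_glb_lt; lra).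
  assert (Ht : 0 < t) by (unfold t; apply Rdiv_lt_0_compat; lra).
  assert (Hst : Rabs (x0 + s * t - x0) < Rmin a b).
  { replace (x0 + s*t - x0) with (s*t) by ring. rewrite Rabs_mult, (Rabs_right t) by lra.
    unfold t. field_simplify; lra. }
  assert (Hma : Rmin a b <= a) by apply Rmin_l. assert (Hmb : Rmin a b <= b) by apply Rmin_r.
  assert (Hne2 : x0 + s * t <> x0). { intro H. assert (s * t = 0) by lra.
    apply Rmult_integral in H0. destruct H0; lra. }
  assert (H1 : Rabs (g (x0 + s*t) - g x0) < e).
  { apply Ha'. split. split. exact I. auto. simpl. unfold R_dist. lra. }
  assert (H2 : Rabs (h (x0 + s*t) - h x0) < e).
  { apply Hb'. split. split. exact I. auto. simpl. unfold R_dist. lra. }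
  rewrite E in H1 by auto.
  assert (Rabs (g x0 - h x0) <= Rabs (h (x0 + s*t) - g x0) + Rabs (h (x0 + s*t) - h x0)).
  { replace (g x0 - h x0) with ((h (x0 + s*t) - h x0) - (h (x0 + s*t) - g x0)) by ring.
    eapply Rle_trans; [apply Rabs_triang|]. rewrite Rabs_Ropp. lra. }
  unfold e in *. lra.
Qed.

Lemma connect (A B : R -> Prop) u v : u < v -> B u -> A v ->
  (forall c, u <= c <= v -> A c -> exists d, 0 < d /\ forall c', u <= c' <= v -> Rabs (c' - c) < d -> A c') ->
  (forall c, u <= c <= v -> B c -> exists d, 0 < d /\ forall c', u <= c' <= v -> Rabs (c' - c) < d -> B c') ->
  (forall c, u <= c <= v -> A c -> B c -> False) ->
  exists c, u <= c <= v /\ ~ A c /\ ~ B c.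
Proof.
  intros Huv HBu HAv HAo HBo Hdis.
  set (E := fun x => u <= x <= v /\ forall y, u <= y <= x -> B y).
  assert (HB : bound E). { exists v. intros x [Hx _]. lra. }
  assert (HE : exists x, E x). { exists u. split; [lra|]. intros y Hy. replace y with u by lra. auto. }
  destruct (completeness E HB HE) as [s [Hub Hlub]].
  assert (Hs0 : u <= s). { apply Hub. split; [lra|]. intros y Hy. replace y with u by lra. auto. }
  assert (Hs1 : s <= v). { apply Hlub. intros x [Hx _]. lra. }
  assert (Hbel : forall y, u <= y < s -> B y).
  { intros y Hy. destruct (classic (exists e, E e /\ y < e)) as [[e [[He1 He2] Hye]]|Hn].
    - apply He2; lra.
    - exfalso. assert (s <= y); [|lra]. apply Hlub. intros e He.
      destruct (Rle_dec e y); auto. exfalso; apply Hn; exists e; split; auto; lra. }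
  exists s. split; [lra|]. split.
  - intros HAs. destruct (HAo s (conj Hs0 Hs1) HAs) as [d [Hd Hd']].
    destruct (Req_dec s u) as [->|Hne].
    { apply (Hdis u); auto; lra. }
    set (y := Rmax u (s - d/2)).
    assert (u <= y) by apply Rmax_l. assert (s - d/2 <= y) by apply Rmax_r.
    assert (y < s) by (unfold y; apply Rmax_lub_lt; lra).
    apply (Hdis y). lra. apply Hd'. lra. rewrite Rabs_left by lra. lra.
    apply Hbel. lra.
  - intros HBs. destruct (HBo s (conj Hs0 Hs1) HBs) as [d [Hd Hd']].
    destruct (Req_dec s v) as [->|Hne].
    { apply (Hdis v); auto; lra. }
    set (t := Rmin (s + d/2) v).
    assert (t <= s + d/2) by apply Rmin_l. assert (t <= v) by apply Rmin_r.
    assert (s < t) by (unfold t; apply Rmin_glb_lt; lra).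
    assert (E t).
    { split. lra. intros y Hy. destruct (Rlt_dec y s). apply Hbel; lra. apply Hd'. lra.
      rewrite Rabs_right by lra. lra. }
    assert (t <= s) by (apply Hub; auto). lra.
Qed.

Definition clamp u := Rmax 0 (Rmin u 1).
Definition Pt (Psie : R -> R) u := Psie (clamp u).

Lemma clamp_lip u v : Rabs (clamp u - clamp v) <= Rabs (u - v).
Proof.
  unfold clamp, Rmax, Rmin.
  repeat (destruct Rle_dec); unfold Rabs; repeat destruct Rcase_abs; lra.
Qed.

Lemma clamp_range u : 0 <= clamp u <= 1.
Proof. unfold clamp, Rmax, Rmin. repeat destruct Rle_dec; lra. Qed.

Lemma clamp_id u : 0 <= u <= 1 -> clamp u = u.
Proof. intros. unfold clamp, Rmax, Rmin. repeat destruct Rle_dec; lra. Qed.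

Lemma clamp_ge1 u : 1 <= u -> clamp u = 1.
Proof. intros. unfold clamp, Rmax, Rmin. repeat destruct Rle_dec; lra. Qed.

Lemma clamp_lt1 u : u < 1 -> clamp u < 1.
Proof. intros. unfold clamp, Rmax, Rmin. repeat destruct Rle_dec; lra. Qed.

Lemma smooth_cont f : smooth f -> forall x, continuity_pt f x.
Proof.
  intros Hs x. destruct (Hs 1%nat x) as [l Hl]. simpl in Hl. apply (der_cont f l). exact Hl.
Qed.

Lemma smooth_lip f : smooth f -> exists L, 0 <= L /\
  forall u v, 0 <= u <= 1 -> 0 <= v <= 1 -> Rabs (f u - f v) <= L * Rabs (u - v).
Proof.
  intros Hs.
  assert (Hd : forall x, is_derive f x (Derive f x)).
  { intros x. apply Derive_correct. exact (Hs 1%nat x). }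
  assert (Hc : forall x, continuity_pt (fun y => Rabs (Derive f y)) x).
  { intros x. apply continuity_pt_filterlim.
    apply (continuous_comp (Derive f) Rabs).
    - apply (ex_derive_continuous (Derive f)). exact (Hs 2%nat x).
    - apply continuous_Rabs. }
  destruct (continuity_ab_maj (fun y => Rabs (Derive f y)) 0 1) as [M [HM _]]. lra.
  intros; apply Hc.
  exists (Rabs (Derive f M)). split. apply Rabs_pos.
  intros u v Hu Hv.
  destruct (Req_dec u v) as [->|Hne]. { rewrite !Rminus_diag, Rabs_R0. lra. }
  destruct (Rlt_dec u v) as [Hlt|Hge].
  - destruct (mvt_open f (Derive f) u v) as [c [Hc1 Hc2]]; auto.
    rewrite <- Rabs_Ropp. replace (- (f u - f v)) with (f v - f u) by ring. rewrite Hc2.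
    rewrite Rabs_mult. rewrite <- (Rabs_Ropp (u - v)). replace (- (u - v)) with (v - u) by ring.
    apply Rmult_le_compat_r. apply Rabs_pos. apply HM. lra.
  - destruct (mvt_open f (Derive f) v u) as [c [Hc1 Hc2]]; auto. lra.
    rewrite Hc2. rewrite Rabs_mult.
    apply Rmult_le_compat_r. apply Rabs_pos. apply HM. lra.
Qed.


Lemma Pt_nonneg (Psi Psie : R -> R) (Heq : forall x, 0 <= x <= 1 -> Psie x = Psi x)
  (Hnn : forall x, 0 <= x <= 1 -> 0 <= Psi x) u : 0 <= Pt Psie u.
Proof. unfold Pt. rewrite Heq by apply clamp_range. apply Hnn, clamp_range. Qed.

Lemma Pt_eq (Psi Psie : R -> R) (Heq : forall x, 0 <= x <= 1 -> Psie x = Psi x) u :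
  0 <= u <= 1 -> Pt Psie u = Psi u.
Proof. intros. unfold Pt. rewrite clamp_id by auto. auto. Qed.

Lemma Pt_ge1 (Psi Psie : R -> R) (Heq : forall x, 0 <= x <= 1 -> Psie x = Psi x) (H1 : Psi 1 = 0) u :
  1 <= u -> Pt Psie u = 0.
Proof. intros. unfold Pt. rewrite clamp_ge1 by auto. rewrite Heq by lra. auto. Qed.

Lemma Pt_pos (Psi Psie : R -> R) (Heq : forall x, 0 <= x <= 1 -> Psie x = Psi x)
  (Hpos : forall x, 0 <= x < 1 -> 0 < Psi x) u : u < 1 -> 0 < Pt Psie u.
Proof. intros. unfold Pt. rewrite Heq by apply clamp_range. apply Hpos.
  split. apply clamp_range. apply clamp_lt1; auto. Qed.

Lemma Pt_lip (Psie : R -> R) (Hsm : smooth Psie) :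
  exists L, 0 <= L /\ forall u v, Rabs (Pt Psie u - Pt Psie v) <= L * Rabs (u - v).
Proof.
  destruct (smooth_lip Psie Hsm) as [L [HL HL']].
  exists L. split; auto. intros u v. unfold Pt.
  eapply Rle_trans. apply HL'; apply clamp_range.
  apply Rmult_le_compat_l; auto. apply clamp_lip.
Qed.


Lemma lip_cont (g : R -> R) L : 0 <= L -> (forall u v, Rabs (g u - g v) <= L * Rabs (u - v)) ->
  forall x, continuity_pt g x.
Proof.
  intros HL Hl x eps Heps. exists (eps / (L + 1)). split.
  apply Rdiv_lt_0_compat; lra.
  intros y [_ Hy]. simpl in *. unfold R_dist in *.
  eapply Rle_lt_trans. apply Hl.
  apply Rle_lt_trans with (L * (eps / (L+1))).
  apply Rmult_le_compat_l; lra.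
  replace (L * (eps / (L + 1))) with (eps * (L / (L+1))) by (field; lra).
  assert (L / (L+1) < 1). { apply Rmult_lt_reg_r with (L+1). lra. field_simplify; lra. }
  nra.
Qed.

Ltac derf f x df Hf :=
  let E := fresh in
  assert (E : Derive (fun y => f y) x = df) by (apply is_derive_unique; exact Hf); rewrite E; clear E.

Lemma abs_prod_le X Y : 2 * Rabs X * Rabs Y <= X^2 + Y^2.
Proof.
  assert (0 <= (Rabs X - Rabs Y)^2) by apply pow2_ge_0.
  assert (Rabs X ^2 = X^2) by apply pow2_abs.
  assert (Rabs Y ^2 = Y^2) by apply pow2_abs.
  nra.
Qed.

Lemma sq_zero_le x : x * x <= 0 -> x = 0.
Proof. intros H. destruct (Req_dec x 0); auto.
  assert (0 < x * x) by (apply Rsqr_pos_lt; auto). lra. Qed.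

Lemma back_uniq (P : R -> R) L a f p xs : 0 <= L -> 0 <= a ->
  (forall u v, Rabs (P u - P v) <= L * Rabs (u - v)) -> P 1 = 0 -> 0 <= xs ->
  (forall x, 0 <= x <= xs -> is_derive f x (p x) /\ is_derive p x (a * p x - P (f x))) ->
  f xs = 1 -> p xs = 0 -> f 0 = 1 /\ p 0 = 0.
Proof.
  intros HL Ha Hlip HP1 Hxs Hd Hf1 Hp0.
  set (K := 1 + L).
  set (g := fun y => exp (K*y) * ((f y - 1)^2 + p y ^2)).
  assert (Hg : g 0 <= g xs).
  { apply (mono_deriv g (fun x => exp (K*x) * (K * ((f x - 1)^2 + p x ^2) + 2*(f x - 1)*(p x)
        + 2 * p x * (a * p x - P (f x))))); auto.
    - intros x Hx. destruct (Hd x Hx) as [Hf Hp]. unfold g. auto_derive.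
      + split. exists (p x); auto. split. exists (a * p x - P (f x)); auto. auto.
      + derf f x (p x) Hf. derf p x (a * p x - P (f x)) Hp. ring.
    - intros x Hx. apply Rmult_le_pos. left; apply exp_pos.
      set (X := f x - 1). set (Y := p x). set (Q := P (f x)).
      assert (HQ : Rabs Q <= L * Rabs X).
      { unfold Q, X. replace (P (f x)) with (P (f x) - P 1) by (rewrite HP1; ring). apply Hlip. }
      assert (H1 := abs_prod_le X Y).
      assert (H2 : Y * Q <= Rabs Y * Rabs Q).
      { rewrite <- Rabs_mult. apply Rle_abs. }
      assert (H3 : - (X * Y) <= Rabs X * Rabs Y).
      { rewrite <- Rabs_mult. rewrite <- Rabs_Ropp. apply Rle_abs. }
      assert (H4 : Rabs Y * Rabs Q <= L * (Rabs X * Rabs Y)).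
      { replace (L * (Rabs X * Rabs Y)) with (Rabs Y * (L * Rabs X)) by ring.
        apply Rmult_le_compat_l; auto. apply Rabs_pos. }
      assert (0 <= a * Y^2) by (apply Rmult_le_pos; nra).
      assert (L * (2 * Rabs X * Rabs Y) <= L * (X^2+Y^2)) by (apply Rmult_le_compat_l; lra).
      unfold K. nra. }
  unfold g in Hg. rewrite Hf1, Hp0 in Hg. 
  replace ((1 - 1) ^ 2 + 0 ^ 2) with 0 in Hg by ring. rewrite Rmult_0_r in Hg.
  rewrite Rmult_0_r, exp_0, Rmult_1_l in Hg.
  assert (Hq1 := pow2_ge_0 (f 0 - 1)). assert (Hq2 := pow2_ge_0 (p 0)).
  assert (Ha1 : (f 0 - 1)*(f 0 - 1) <= 0) by (simpl in *; lra).
  assert (Ha2 : p 0 * p 0 <= 0) by (simpl in *; lra).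
  split; [apply sq_zero_le in Ha1; lra| apply sq_zero_le in Ha2; lra].
Qed.

Lemma dep (P : R -> R) L a a' f p f' p' X B : 0 <= L -> 0 <= a' ->
  (forall u v, Rabs (P u - P v) <= L * Rabs (u - v)) -> 0 <= X ->
  (forall x, 0 <= x <= X -> Rabs (p x) <= B) ->
  (forall x, 0 <= x <= X -> is_derive f x (p x) /\ is_derive p x (a * p x - P (f x))) ->
  (forall x, 0 <= x <= X -> is_derive f' x (p' x) /\ is_derive p' x (a' * p' x - P (f' x))) ->
  forall x, 0 <= x <= X ->
  (f x - f' x)^2 + (p x - p' x)^2 <=
    exp ((3 + 2*a' + L) * X) * ((f 0 - f' 0)^2 + (p 0 - p' 0)^2 + (a - a')^2 * B^2).
Proof.
  intros HL Ha Hlip HX HB Hd Hd' x Hx.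
  set (K := 3 + 2*a' + L).
  set (del := (a - a')^2 * B^2).
  assert (Hdel : 0 <= del) by (unfold del; apply Rmult_le_pos; apply pow2_ge_0).
  set (g := fun y => exp (-(K*y)) * ((f y - f' y)^2 + (p y - p' y)^2 + del)).
  assert (Hg : g x <= g 0).
  { apply (anti_deriv g (fun y => exp (-(K*y)) * (- K * ((f y - f' y)^2 + (p y - p' y)^2 + del)
        + 2*(f y - f' y)*(p y - p' y)
        + 2 * (p y - p' y) * ((a * p y - P (f y)) - (a' * p' y - P (f' y)))))); try lra.
    - intros y Hy. assert (Hy' : 0 <= y <= X) by lra.
      destruct (Hd y Hy') as [Hf Hp]. destruct (Hd' y Hy') as [Hf' Hp'].
      unfold g. auto_derive.
      + repeat split; try (eexists; eauto). 
      + derf f y (p y) Hf. derf p y (a * p y - P (f y)) Hp.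
        derf f' y (p' y) Hf'. derf p' y (a' * p' y - P (f' y)) Hp'. ring.
    - intros y Hy. 
      assert (Hy' : 0 <= y <= X) by lra.
      rewrite <- (Rmult_0_r (exp (-(K*y)))). apply Rmult_le_compat_l. left; apply exp_pos.
      set (U := f y - f' y). set (V := p y - p' y).
      assert (HQ : Rabs (P (f y) - P (f' y)) <= L * Rabs U) by apply Hlip.
      assert (Hpb : p y ^2 <= B^2).
      { specialize (HB y Hy'). rewrite <- pow2_abs. apply pow_incr. split; auto. apply Rabs_pos. }
      replace ((a * p y - P (f y)) - (a' * p' y - P (f' y))) with
        (a' * V + (a - a') * p y - (P (f y) - P (f' y))) by (unfold V; ring).
      assert (H1 := abs_prod_le U V).
      assert (H2 : V * (P (f y) - P (f' y)) >= - (Rabs V * Rabs (P (f y) - P (f' y)))).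
      { rewrite <- Rabs_mult. assert (H := Rle_abs (- (V * (P (f y) - P (f' y))))).
        rewrite Rabs_Ropp in H. lra. }
      assert (H3 : U * V <= Rabs U * Rabs V).
      { rewrite <- Rabs_mult. apply Rle_abs. }
      assert (H4 : Rabs V * Rabs (P (f y) - P (f' y)) <= L * (Rabs U * Rabs V)).
      { replace (L * (Rabs U * Rabs V)) with (Rabs V * (L * Rabs U)) by ring.
        apply Rmult_le_compat_l; auto. apply Rabs_pos. }
      assert (L * (2 * Rabs U * Rabs V) <= L * (U^2+V^2)) by (apply Rmult_le_compat_l; lra).
      assert (H5 : 2 * V * ((a - a') * p y) <= V^2 + (a-a')^2 * p y ^2).
      { assert (Hs := pow2_ge_0 (V - (a-a')*p y)).
        replace ((V - (a-a')*p y)^2) with (V^2 + (a-a')^2 * p y ^2 - 2 * V * ((a - a') * p y)) in Hs by ring. lra. }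
      assert ((a-a')^2 * p y ^2 <= del) by (unfold del; apply Rmult_le_compat_l; [apply pow2_ge_0|auto]).
      assert (0 <= a' * V^2) by (apply Rmult_le_pos; [lra|apply pow2_ge_0]).
      unfold K. nra. }
  unfold g in Hg. rewrite Rmult_0_r, Ropp_0, exp_0, Rmult_1_l in Hg.
  assert (HKx : 0 <= K * x) by (unfold K; nra).
  assert (HE1 : exp (K*x) * exp (-(K*x)) = 1) by (rewrite <- exp_plus; replace (K*x + -(K*x)) with 0 by ring; apply exp_0).
  assert (HE2 : exp (K * x) <= exp (K*X)).
  { destruct (Req_dec x X) as [->|]; [lra| left; apply exp_increasing; unfold K; nra]. }
  assert (HE3 : 0 < exp (K*x)) by apply exp_pos.
  set (Dx := (f x - f' x) ^ 2 + (p x - p' x) ^ 2) in *.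
  set (D0 := (f 0 - f' 0) ^ 2 + (p 0 - p' 0) ^ 2) in *.
  assert (Hd0 : Dx + del <= exp (K*x) * (D0 + del)).
  { replace (Dx + del) with (exp (K*x) * (exp (-(K*x)) * (Dx+del))).
    apply Rmult_le_compat_l; lra.
    rewrite <- Rmult_assoc, HE1. ring. }
  assert (HD0 : 0 <= D0) by (unfold D0; assert (H1 := pow2_ge_0 (f 0 - f' 0)); assert (H2 := pow2_ge_0 (p 0 - p' 0)); lra).
  assert (exp (K*x) * (D0 + del) <= exp (K*X) * (D0 + del)) by (apply Rmult_le_compat_r; lra).
  unfold del in *. lra.
Qed.

Definition cont_all (g : R -> R) := forall x, continuity_pt g x.

Lemma cpt_cont g x : continuity_pt g x -> continuous g x.
Proof. intro H. apply (proj1 (continuity_pt_filterlim g x)). exact H. Qed.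

Lemma exR g a b : cont_all g -> ex_RInt g a b.
Proof. intros H. exact (ex_RInt_continuous (V := R_CompleteNormedModule) g a b (fun z _ => cpt_cont g z (H z))). Qed.

Lemma ideriv g x : cont_all g -> is_derive (fun y => RInt g 0 y) x (g x).
Proof.
  intros H. apply (is_derive_RInt g (fun y => RInt g 0 y) 0 x).
  - apply filter_forall. intros b. exact (RInt_correct (V := R_CompleteNormedModule) g 0 b (exR g 0 b H)).
  - apply cpt_cont, H.
Qed.

Lemma RInt_diff g1 g2 a b : cont_all g1 -> cont_all g2 ->
  RInt g1 a b - RInt g2 a b = RInt (fun s => g1 s - g2 s) a b.
Proof.
  intros H1 H2. symmetry. apply (RInt_minus g1 g2); apply exR; auto.
Qed.

Lemma cont_abs g : cont_all g -> cont_all (fun s => Rabs (g s)).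
Proof. intros H x. apply (continuity_pt_comp g Rabs); [apply H| apply Rcontinuity_abs]. Qed.

Lemma RInt_pow_bound g x B m : cont_all g ->
  (forall s, Rmin 0 x <= s <= Rmax 0 x -> Rabs (g s) <= B * Rabs s ^ m) ->
  Rabs (RInt g 0 x) <= B * Rabs x ^ (S m) / INR (S m).
Proof.
  intros Hc Hb.
  assert (HS : 0 < INR (S m)) by (apply lt_0_INR; lia).
  destruct (Rle_dec 0 x) as [Hx|Hx].
  - eapply Rle_trans. apply abs_RInt_le; auto. apply exR; auto.
    eapply Rle_trans. apply (RInt_le _ (fun s => B * s ^ m)); auto.
    apply exR, cont_abs; auto.
    apply exR. intros z. apply continuity_pt_scal.
    apply derivable_continuous_pt. apply derivable_pt_pow.
    intros s Hs. rewrite <- (Rabs_right s) at 2 by lra. apply Hb.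
    rewrite Rmin_left, Rmax_right by lra. lra.
    assert (E : is_RInt (fun s => B * s ^ m) 0 x
      (minus ((fun s => B * s ^ (S m) / INR (S m)) x) ((fun s => B * s ^ (S m) / INR (S m)) 0))).
    { apply (is_RInt_derive (fun s => B * s ^ (S m) / INR (S m))).
      - intros s _. auto_derive; auto.
        change (match m with 0%nat => 1 | S _ => INR m + 1 end) with (INR (S m)). field. lra.
      - intros s _. apply cpt_cont. apply continuity_pt_scal.
        apply derivable_continuous_pt. apply derivable_pt_pow. }
    rewrite (is_RInt_unique _ _ _ _ E). unfold minus, plus, opp; simpl.
    change (match m with 0%nat => 1 | S _ => INR m + 1 end) with (INR (S m)).
    rewrite Rabs_right by lra. right. field. lra.
  - assert (Hx' : x < 0) by lra.
    assert (E0 : RInt g 0 x = - RInt g x 0).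
    { rewrite <- (opp_RInt_swap g x 0). reflexivity. apply exR; auto. }
    rewrite E0, Rabs_Ropp.
    eapply Rle_trans. apply abs_RInt_le; [lra|]. apply exR; auto.
    eapply Rle_trans. apply (RInt_le _ (fun s => B * (- s) ^ m)); [lra| | |].
    apply exR, cont_abs; auto.
    apply exR. intros z. apply continuity_pt_scal.
    apply (continuity_pt_comp (fun s => - s) (fun s => s ^ m)).
    apply continuity_pt_opp, derivable_continuous_pt, derivable_pt_id.
    apply derivable_continuous_pt. apply derivable_pt_pow.
    intros s Hs. rewrite <- (Rabs_left s) by lra. apply Hb.
    rewrite Rmin_right, Rmax_left by lra. lra.
    assert (E : is_RInt (fun s => B * (- s) ^ m) x 0
      (minus ((fun s => - B * (- s) ^ (S m) / INR (S m)) 0) ((fun s => - B * (- s) ^ (S m) / INR (S m)) x))).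
    { apply (is_RInt_derive (fun s => - B * (- s) ^ (S m) / INR (S m))).
      - intros s _. auto_derive; auto.
        change (match m with 0%nat => 1 | S _ => INR m + 1 end) with (INR (S m)). field. lra.
      - intros s _. apply cpt_cont. apply continuity_pt_scal.
        apply (continuity_pt_comp (fun s => - s) (fun s => s ^ m)).
        apply continuity_pt_opp, derivable_continuous_pt, derivable_pt_id.
        apply derivable_continuous_pt. apply derivable_pt_pow. }
    rewrite (is_RInt_unique _ _ _ _ E). unfold minus, plus, opp; simpl.
    change (match m with 0%nat => 1 | S _ => INR m + 1 end) with (INR (S m)).
    rewrite Rabs_left by lra. right. field. lra.
Qed.

Lemma cont_eps g x : continuity_pt g x -> forall e, 0 < e ->
  exists d, 0 < d /\ forall y, Rabs (y - x) < d -> Rabs (g y - g x) < e.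
Proof.
  intros Hc e He. destruct (Hc e He) as [d [Hd Hd']]. exists d. split; auto.
  intros y Hy. destruct (Req_dec y x) as [->|Hne].
  - rewrite Rminus_diag, Rabs_R0. lra.
  - apply Hd'. split. split. exact I. auto. exact Hy.
Qed.

Lemma cont_intro g x : (forall e, 0 < e ->
  exists d, 0 < d /\ forall y, Rabs (y - x) < d -> Rabs (g y - g x) < e) -> continuity_pt g x.
Proof.
  intros H e He. destruct (H e He) as [d [Hd Hd']]. exists d. split; auto.
  intros y [_ Hy]. apply Hd'. exact Hy.
Qed.

Definition Lip2 (F : R -> R -> R) K := forall u1 v1 u2 v2,
  Rabs (F u1 v1 - F u2 v2) <= K * (Rabs (u1 - u2) + Rabs (v1 - v2)).

Lemma cont_F F K g1 g2 : 0 <= K -> Lip2 F K -> cont_all g1 -> cont_all g2 ->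
  cont_all (fun s => F (g1 s) (g2 s)).
Proof.
  intros HK HF H1 H2 x. apply cont_intro. intros e He.
  set (e' := e / (2*K + 2)).
  assert (He' : 0 < e') by (unfold e'; apply Rdiv_lt_0_compat; lra).
  destruct (cont_eps g1 x (H1 x) e' He') as [d1 [Hd1 Hd1']].
  destruct (cont_eps g2 x (H2 x) e' He') as [d2 [Hd2 Hd2']].
  exists (Rmin d1 d2). split. apply Rmin_glb_lt; auto.
  intros y Hy. assert (Rmin d1 d2 <= d1) by apply Rmin_l. assert (Rmin d1 d2 <= d2) by apply Rmin_r.
  eapply Rle_lt_trans. apply HF.
  assert (A1 : Rabs (g1 y - g1 x) < e') by (apply Hd1'; lra).
  assert (A2 : Rabs (g2 y - g2 x) < e') by (apply Hd2'; lra).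
  assert (K * (Rabs (g1 y - g1 x) + Rabs (g2 y - g2 x)) <= K * (2 * e')) by (apply Rmult_le_compat_l; lra).
  assert (K * (2 * e') < e). { unfold e'. apply Rmult_lt_reg_r with (2*K+2). lra.
    field_simplify; nra. }
  lra.
Qed.

Lemma deriv_cont_all g dg : (forall x, is_derive g x (dg x)) -> cont_all g.
Proof. intros H x. apply (der_cont g (dg x)), H. Qed.

Fixpoint pic (F : R -> R -> R) (y0 v0 : R) (n : nat) : (R -> R) * (R -> R) :=
  match n with
  | O => (fun _ => y0, fun _ => v0)
  | S n' => let fp := pic F y0 v0 n' in
     (fun x => y0 + RInt (snd fp) 0 x, fun x => v0 + RInt (fun s => F (fst fp s) (snd fp s)) 0 x)
  end.

Lemma prim_deriv c g x : cont_all g -> is_derive (fun y => c + RInt g 0 y) x (g x).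
Proof.
  intros H. replace (g x) with (0 + g x) by ring.
  apply is_derive_Reals. apply (derivable_pt_lim_plus (fun _ => c) (fun y => RInt g 0 y)).
  apply derivable_pt_lim_const. apply is_derive_Reals. apply ideriv; auto.
Qed.

Lemma pic_cont F K y0 v0 n : 0 <= K -> Lip2 F K ->
  cont_all (fst (pic F y0 v0 n)) /\ cont_all (snd (pic F y0 v0 n)).
Proof.
  intros HK HF. induction n as [|n [IH1 IH2]].
  - simpl. split; intros x; apply continuity_pt_const; intros a b; auto.
  - split.
    + apply (deriv_cont_all _ (fun x => snd (pic F y0 v0 n) x)). intros x. simpl.
      exact (prim_deriv y0 (snd (pic F y0 v0 n)) x IH2).
    + apply (deriv_cont_all _ (fun x => F (fst (pic F y0 v0 n) x) (snd (pic F y0 v0 n) x))).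
      intros x. simpl.
      exact (prim_deriv v0 (fun s => F (fst (pic F y0 v0 n) s) (snd (pic F y0 v0 n) s)) x
        (cont_F F K _ _ HK HF IH1 IH2)).
Qed.

Definition fnp F y0 v0 n := fst (pic F y0 v0 n).
Definition pnp F y0 v0 n := snd (pic F y0 v0 n).

Lemma fnp_S F y0 v0 n x : fnp F y0 v0 (S n) x = y0 + RInt (pnp F y0 v0 n) 0 x.
Proof. reflexivity. Qed.
Lemma pnp_S F y0 v0 n x : pnp F y0 v0 (S n) x =
  v0 + RInt (fun s => F (fnp F y0 v0 n s) (pnp F y0 v0 n s)) 0 x.
Proof. reflexivity. Qed.

Lemma fact_pos n : 0 < INR (fact n).
Proof. apply lt_0_INR. apply lt_O_fact. Qed.

Lemma pic_bound F K y0 v0 n : 0 <= K -> Lip2 F K -> forall x,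
  Rabs (fnp F y0 v0 (S n) x - fnp F y0 v0 n x) + Rabs (pnp F y0 v0 (S n) x - pnp F y0 v0 n x)
  <= (Rabs v0 + Rabs (F y0 v0)) * (1+K)^n * Rabs x ^ (S n) / INR (fact (S n)).
Proof.
  intros HK HF. 
  assert (HC : forall k, cont_all (fnp F y0 v0 k) /\ cont_all (pnp F y0 v0 k)).
  { intros k. apply (pic_cont F K); auto. }
  induction n as [|n IH]; intros x.
  - rewrite fnp_S, pnp_S. unfold fnp, pnp. simpl.
    rewrite !RInt_const. unfold scal; simpl. unfold mult; simpl.
    replace (y0 + (x - 0) * v0 - y0) with (x * v0) by ring.
    replace (v0 + (x - 0) * F y0 v0 - v0) with (x * F y0 v0) by ring.
    rewrite !Rabs_mult. right. field.
  - set (b := (Rabs v0 + Rabs (F y0 v0)) * (1 + K) ^ n / INR (fact (S n))).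
    assert (Hb : forall s, Rabs (fnp F y0 v0 (S n) s - fnp F y0 v0 n s) + Rabs (pnp F y0 v0 (S n) s - pnp F y0 v0 n s) <= b * Rabs s ^ (S n)).
    { intros s. eapply Rle_trans. apply IH. unfold b. right. field. apply Rgt_not_eq, fact_pos. }
    destruct (HC n) as [Cf Cp]. destruct (HC (S n)) as [Cf' Cp'].
    assert (E1 : fnp F y0 v0 (S (S n)) x - fnp F y0 v0 (S n) x =
        RInt (fun s => pnp F y0 v0 (S n) s - pnp F y0 v0 n s) 0 x).
    { rewrite !fnp_S. rewrite <- RInt_diff; auto. ring. }
    assert (E2 : pnp F y0 v0 (S (S n)) x - pnp F y0 v0 (S n) x =
        RInt (fun s => F (fnp F y0 v0 (S n) s) (pnp F y0 v0 (S n) s) - F (fnp F y0 v0 n s) (pnp F y0 v0 n s)) 0 x).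
    { rewrite (pnp_S F y0 v0 (S n)), (pnp_S F y0 v0 n). rewrite <- RInt_diff; try ring;
      apply (cont_F F K); auto. }
    rewrite E1, E2.
    assert (B1 := RInt_pow_bound (fun s => pnp F y0 v0 (S n) s - pnp F y0 v0 n s) x b (S n)).
    assert (B2 := RInt_pow_bound (fun s => F (fnp F y0 v0 (S n) s) (pnp F y0 v0 (S n) s) - F (fnp F y0 v0 n s) (pnp F y0 v0 n s)) x (K * b) (S n)).
    assert (Hb0 : 0 <= b).
    { unfold b. apply Rmult_le_pos. apply Rmult_le_pos. 
      assert (0 <= Rabs v0) by apply Rabs_pos. assert (0 <= Rabs (F y0 v0)) by apply Rabs_pos. lra.
      apply pow_le; lra. left; apply Rinv_0_lt_compat, fact_pos. }
    eapply Rle_trans. apply Rplus_le_compat. apply B1.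
    + intros s. apply continuity_pt_minus; auto.
    + intros s _. specialize (Hb s). assert (0 <= Rabs (fnp F y0 v0 (S n) s - fnp F y0 v0 n s)) by apply Rabs_pos. lra.
    + apply B2.
      * intros s. apply continuity_pt_minus; apply (cont_F F K); auto.
      * intros s _. eapply Rle_trans. apply HF. rewrite Rmult_assoc. apply Rmult_le_compat_l; auto.
    + assert (HS : INR (fact (S (S n))) = INR (S (S n)) * INR (fact (S n))).
      { rewrite <- mult_INR. reflexivity. }
      rewrite HS. unfold b. simpl pow. right. field. split.
      apply Rgt_not_eq, fact_pos. apply Rgt_not_eq, lt_0_INR. lia.
Qed.

Fixpoint psum (w : nat -> R) (n : nat) : R :=
  match n with O => 0 | S n => psum w n + w n end.

Definition wT (M0 C T : R) (k : nat) := M0 * T * ((C*T)^k / INR (fact k)).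

Lemma wT_nonneg M0 C T k : 0 <= M0 -> 0 <= C -> 0 <= T -> 0 <= wT M0 C T k.
Proof.
  intros. unfold wT. apply Rmult_le_pos. apply Rmult_le_pos; auto.
  apply Rmult_le_pos. apply pow_le. nra. left; apply Rinv_0_lt_compat, fact_pos.
Qed.

Lemma psum_E1 M0 C T N : psum (wT M0 C T) (S N) = M0 * T * E1 (C*T) N.
Proof.
  unfold E1. induction N as [|N IH].
  - simpl. unfold wT. simpl. field.
  - change (psum (wT M0 C T) (S (S N))) with (psum (wT M0 C T) (S N) + wT M0 C T (S N)).
    rewrite IH. cbn [sum_f_R0]. unfold wT. field. apply Rgt_not_eq, fact_pos.
Qed.

Lemma psum_lim M0 C T : Un_cv (psum (wT M0 C T)) (M0 * T * exp (C*T)).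
Proof.
  intros eps Heps.
  set (A := Rabs (M0 * T) + 1).
  assert (HA : 0 < A) by (unfold A; assert (0 <= Rabs (M0*T)) by apply Rabs_pos; lra).
  destruct (E1_cvg (C*T) (eps / A)) as [N HN]. apply Rdiv_lt_0_compat; lra.
  exists (S N). intros n Hn. destruct n as [|n]; [lia|].
  rewrite psum_E1. unfold Rdist.
  replace (M0 * T * E1 (C * T) n - M0 * T * exp (C * T)) with (M0 * T * (E1 (C * T) n - exp (C * T))) by ring.
  rewrite Rabs_mult. specialize (HN n ltac:(lia)). unfold Rdist in HN.
  assert (0 <= Rabs (M0*T)) by apply Rabs_pos.
  apply Rle_lt_trans with (A * Rabs (E1 (C * T) n - exp (C * T))).
  apply Rmult_le_compat_r. apply Rabs_pos. unfold A; lra.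
  apply Rmult_lt_reg_r with (/ A). apply Rinv_0_lt_compat; lra.
  replace (A * Rabs (E1 (C * T) n - exp (C * T)) * / A) with (Rabs (E1 (C * T) n - exp (C * T))) by (field; lra).
  exact HN.
Qed.

Lemma psum_mono w n m : (forall k, 0 <= w k) -> (n <= m)%nat -> psum w n <= psum w m.
Proof.
  intros Hw Hnm. induction Hnm. lra. simpl. specialize (Hw m). lra.
Qed.

Lemma psum_le_lim w l n : (forall k, 0 <= w k) -> Un_cv (psum w) l -> psum w n <= l.
Proof.
  intros Hw Hl. destruct (Rle_dec (psum w n) l) as [|Hn]; auto. exfalso.
  destruct (Hl (psum w n - l)) as [N HN]. lra.
  specialize (HN (max N n) ltac:(lia)). unfold Rdist in HN.
  assert (psum w n <= psum w (max N n)) by (apply psum_mono; auto; lia).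
  apply Rabs_def2 in HN. lra.
Qed.

Lemma tau_small w l : (forall k, 0 <= w k) -> Un_cv (psum w) l ->
  forall e, 0 < e -> exists N, forall n, (N <= n)%nat -> 0 <= l - psum w n < e.
Proof.
  intros Hw Hl e He. destruct (Hl e He) as [N HN]. exists N. intros n Hn.
  specialize (HN n Hn). unfold Rdist in HN. apply Rabs_def2 in HN.
  assert (psum w n <= l) by (apply psum_le_lim; auto). lra.
Qed.

Lemma tele F K y0 v0 T x : 0 <= K -> Lip2 F K -> Rabs x <= T ->
  forall n m, (n <= m)%nat ->
  Rabs (fnp F y0 v0 m x - fnp F y0 v0 n x) + Rabs (pnp F y0 v0 m x - pnp F y0 v0 n x) <=
  psum (wT (Rabs v0 + Rabs (F y0 v0)) (1+K) T) m - psum (wT (Rabs v0 + Rabs (F y0 v0)) (1+K) T) n.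
Proof.
  intros HK HF HT n m Hnm. induction Hnm.
  - rewrite !Rminus_diag, Rabs_R0. lra.
  - simpl psum.
    assert (Hb := pic_bound F K y0 v0 m HK HF x).
    assert (Hw : (Rabs v0 + Rabs (F y0 v0)) * (1 + K) ^ m * Rabs x ^ S m / INR (fact (S m))
                 <= wT (Rabs v0 + Rabs (F y0 v0)) (1 + K) T m).
    { unfold wT. set (M0 := Rabs v0 + Rabs (F y0 v0)).
      assert (HM0 : 0 <= M0) by (unfold M0; assert (0 <= Rabs v0) by apply Rabs_pos; assert (0 <= Rabs (F y0 v0)) by apply Rabs_pos; lra).
      assert (HT0 : 0 <= T) by (assert (0 <= Rabs x) by apply Rabs_pos; lra).
      assert (HS : INR (fact (S m)) = INR (S m) * INR (fact m)) by (rewrite <- mult_INR; reflexivity).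
      assert (HSm : 1 <= INR (S m)) by (rewrite S_INR; assert (0 <= INR m) by apply pos_INR; lra).
      assert (Hf := fact_pos m).
      assert (Hxp : Rabs x ^ S m <= T ^ S m) by (apply pow_incr; split; auto; apply Rabs_pos).
      rewrite HS. rewrite Rpow_mult_distr. simpl pow.
      assert (HCm : 0 <= (1+K)^m) by (apply pow_le; lra).
      assert (HTm : 0 <= T^m) by (apply pow_le; lra).
      simpl pow in Hxp.
      apply Rle_trans with (M0 * (1 + K) ^ m * (T * T ^ m) / (INR (S m) * INR (fact m))).
      { unfold Rdiv. apply Rmult_le_compat_r. left; apply Rinv_0_lt_compat; nra.
        apply Rmult_le_compat_l; [apply Rmult_le_pos; auto| exact Hxp]. }
      apply Rle_trans with (M0 * (1 + K) ^ m * (T * T ^ m) / (INR (fact m))).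
      { unfold Rdiv. apply Rmult_le_compat_l. apply Rmult_le_pos; [apply Rmult_le_pos; auto|apply Rmult_le_pos; auto].
        apply Rinv_le_contravar; nra. }
      right. field. lra. }
    assert (Htri1 : Rabs (fnp F y0 v0 (S m) x - fnp F y0 v0 n x) <= Rabs (fnp F y0 v0 (S m) x - fnp F y0 v0 m x) + Rabs (fnp F y0 v0 m x - fnp F y0 v0 n x)).
    { replace (fnp F y0 v0 (S m) x - fnp F y0 v0 n x) with ((fnp F y0 v0 (S m) x - fnp F y0 v0 m x) + (fnp F y0 v0 m x - fnp F y0 v0 n x)) by ring. apply Rabs_triang. }
    assert (Htri2 : Rabs (pnp F y0 v0 (S m) x - pnp F y0 v0 n x) <= Rabs (pnp F y0 v0 (S m) x - pnp F y0 v0 m x) + Rabs (pnp F y0 v0 m x - pnp F y0 v0 n x)).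
    { replace (pnp F y0 v0 (S m) x - pnp F y0 v0 n x) with ((pnp F y0 v0 (S m) x - pnp F y0 v0 m x) + (pnp F y0 v0 m x - pnp F y0 v0 n x)) by ring. apply Rabs_triang. }
    lra.
Qed.

Lemma cauchy_from (u a : nat -> R) L : (forall n m, (n <= m)%nat -> Rabs (u m - u n) <= a m - a n) ->
  (forall n, a n <= L) -> (forall e, 0 < e -> exists N, forall n, (N <= n)%nat -> L - a n < e) ->
  Cauchy_crit u.
Proof.
  intros H1 H2 H3 e He. destruct (H3 e He) as [N HN]. exists N. intros n m Hn Hm. unfold Rdist.
  destruct (Nat.le_ge_cases n m) as [Hnm|Hnm].
  - rewrite <- Rabs_Ropp. replace (- (u n - u m)) with (u m - u n) by ring.
    specialize (H1 n m Hnm). specialize (HN n Hn). specialize (H2 m). lra.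
  - specialize (H1 m n Hnm). specialize (HN m Hm). specialize (H2 n). lra.
Qed.

Lemma abs3 a b c : Rabs (a + b - c) <= Rabs a + Rabs b + Rabs c.
Proof.
  eapply Rle_trans. unfold Rminus. apply Rabs_triang. rewrite Rabs_Ropp.
  apply Rplus_le_compat_r. apply Rabs_triang.
Qed.

Lemma eq_eps a b : (forall e, 0 < e -> Rabs (a - b) <= e) -> a = b.
Proof.
  intros H. destruct (Req_dec a b) as [|Hne]; auto. exfalso.
  assert (Hp : 0 < Rabs (a - b)) by (apply Rabs_pos_lt; lra).
  specialize (H (Rabs (a - b) / 2) ltac:(lra)). lra.
Qed.

Lemma ivp_exists (F : R -> R -> R) K y0 v0 : 0 <= K -> Lip2 F K ->
  exists f p : R -> R, (forall x, is_derive f x (p x)) /\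
    (forall x, is_derive p x (F (f x) (p x))) /\ f 0 = y0 /\ p 0 = v0.
Proof.
  intros HK HF.
  set (M0 := Rabs v0 + Rabs (F y0 v0)).
  assert (HM0 : 0 <= M0) by (unfold M0; assert (0 <= Rabs v0) by apply Rabs_pos; assert (0 <= Rabs (F y0 v0)) by apply Rabs_pos; lra).
  set (C := 1 + K).
  set (W := fun T => wT M0 C T).
  set (SW := fun T => M0 * T * exp (C*T)).
  assert (Hw : forall T, 0 <= T -> forall k, 0 <= W T k) by (intros; apply wT_nonneg; unfold C; lra).
  assert (Hcv : forall T, Un_cv (psum (W T)) (SW T)) by (intros; apply psum_lim).
  assert (Htau : forall T, 0 <= T -> forall e, 0 < e -> exists N, forall n, (N <= n)%nat -> 0 <= SW T - psum (W T) n < e).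
  { intros T HT. apply tau_small; auto. }
  assert (Htele : forall T x n m, Rabs x <= T -> (n <= m)%nat ->
     Rabs (fnp F y0 v0 m x - fnp F y0 v0 n x) + Rabs (pnp F y0 v0 m x - pnp F y0 v0 n x) <= psum (W T) m - psum (W T) n).
  { intros. apply tele; auto. }
  assert (Hle : forall T, 0 <= T -> forall n, psum (W T) n <= SW T) by (intros; apply psum_le_lim; auto).
  assert (Hcauchy : forall x, Cauchy_crit (fun n => fnp F y0 v0 n x) /\ Cauchy_crit (fun n => pnp F y0 v0 n x)).
  { intros x. assert (HT : 0 <= Rabs x) by apply Rabs_pos.
    split; apply (cauchy_from _ (psum (W (Rabs x))) (SW (Rabs x))); auto;
      try (intros n m Hnm; assert (H1 := Htele (Rabs x) x n m (Rle_refl _) Hnm);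
           assert (0 <= Rabs (fnp F y0 v0 m x - fnp F y0 v0 n x)) by apply Rabs_pos;
           assert (0 <= Rabs (pnp F y0 v0 m x - pnp F y0 v0 n x)) by apply Rabs_pos; lra);
      intros e He; destruct (Htau (Rabs x) HT e He) as [N' HN']; exists N'; intros n Hn;
      specialize (HN' n Hn); lra. }
  assert (Hex : exists fl pl : R -> R, (forall x, Un_cv (fun n => fnp F y0 v0 n x) (fl x)) /\
                                      (forall x, Un_cv (fun n => pnp F y0 v0 n x) (pl x))).
  { exists (fun x => proj1_sig (Rcomplete.R_complete _ (proj1 (Hcauchy x)))).
    exists (fun x => proj1_sig (Rcomplete.R_complete _ (proj2 (Hcauchy x)))).
    split; intros x.
    - destruct (Rcomplete.R_complete _ (proj1 (Hcauchy x))); simpl; auto.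
    - destruct (Rcomplete.R_complete _ (proj2 (Hcauchy x))); simpl; auto. }
  destruct Hex as [fl [pl [Hfl Hpl]]].
  assert (Hunif : forall T x n, Rabs x <= T ->
    Rabs (fl x - fnp F y0 v0 n x) + Rabs (pl x - pnp F y0 v0 n x) <= SW T - psum (W T) n).
  { intros T x n HxT. assert (HT : 0 <= T) by (assert (0 <= Rabs x) by apply Rabs_pos; lra).
    apply le_epsilon. intros e He.
    destruct (Hfl x (e/2)) as [N1 HN1]. lra. destruct (Hpl x (e/2)) as [N2 HN2]. lra.
    set (m := max (max N1 N2) n).
    specialize (HN1 m ltac:(unfold m; lia)). specialize (HN2 m ltac:(unfold m; lia)).
    unfold Rdist in HN1, HN2.
    assert (H1 := Htele T x n m HxT ltac:(unfold m; lia)).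
    assert (H3 := Hle T HT m).
    assert (Rabs (fl x - fnp F y0 v0 n x) <= Rabs (fnp F y0 v0 m x - fl x) + Rabs (fnp F y0 v0 m x - fnp F y0 v0 n x)).
    { replace (fl x - fnp F y0 v0 n x) with (- (fnp F y0 v0 m x - fl x) + (fnp F y0 v0 m x - fnp F y0 v0 n x)) by ring.
      eapply Rle_trans. apply Rabs_triang. rewrite Rabs_Ropp. lra. }
    assert (Rabs (pl x - pnp F y0 v0 n x) <= Rabs (pnp F y0 v0 m x - pl x) + Rabs (pnp F y0 v0 m x - pnp F y0 v0 n x)).
    { replace (pl x - pnp F y0 v0 n x) with (- (pnp F y0 v0 m x - pl x) + (pnp F y0 v0 m x - pnp F y0 v0 n x)) by ring.
      eapply Rle_trans. apply Rabs_triang. rewrite Rabs_Ropp. lra. }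
    lra. }
  assert (HC : forall k, cont_all (fnp F y0 v0 k) /\ cont_all (pnp F y0 v0 k)).
  { intros k. apply (pic_cont F K); auto. }
  assert (Hcont : cont_all fl /\ cont_all pl).
  { split; intros x0; apply cont_intro; intros e He;
    (set (T := Rabs x0 + 1); assert (HT : 0 <= T) by (unfold T; assert (0 <= Rabs x0) by apply Rabs_pos; lra);
     destruct (Htau T HT (e/3)) as [N HN]; [lra|]; specialize (HN N (le_n N));
     destruct (HC N) as [CfN CpN]).
    - destruct (cont_eps _ x0 (CfN x0) (e/3)) as [d [Hd Hd']]. lra.
      exists (Rmin d 1). split. apply Rmin_glb_lt; lra.
      intros y Hy. assert (Rmin d 1 <= d) by apply Rmin_l. assert (Rmin d 1 <= 1) by apply Rmin_r.
      assert (HyT : Rabs y <= T).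
      { unfold T. replace y with (x0 + (y - x0)) by ring. eapply Rle_trans. apply Rabs_triang. lra. }
      assert (Hx0T : Rabs x0 <= T) by (unfold T; lra).
      assert (U1 := Hunif T y N HyT). assert (U2 := Hunif T x0 N Hx0T).
      assert (V := Hd' y ltac:(lra)).
      assert (0 <= Rabs (pl y - pnp F y0 v0 N y)) by apply Rabs_pos.
      assert (0 <= Rabs (pl x0 - pnp F y0 v0 N x0)) by apply Rabs_pos.
      replace (fl y - fl x0) with ((fl y - fnp F y0 v0 N y) + (fnp F y0 v0 N y - fnp F y0 v0 N x0) - (fl x0 - fnp F y0 v0 N x0)) by ring.
      eapply Rle_lt_trans. apply abs3. lra.
    - destruct (cont_eps _ x0 (CpN x0) (e/3)) as [d [Hd Hd']]. lra.
      exists (Rmin d 1). split. apply Rmin_glb_lt; lra.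
      intros y Hy. assert (Rmin d 1 <= d) by apply Rmin_l. assert (Rmin d 1 <= 1) by apply Rmin_r.
      assert (HyT : Rabs y <= T).
      { unfold T. replace y with (x0 + (y - x0)) by ring. eapply Rle_trans. apply Rabs_triang. lra. }
      assert (Hx0T : Rabs x0 <= T) by (unfold T; lra).
      assert (U1 := Hunif T y N HyT). assert (U2 := Hunif T x0 N Hx0T).
      assert (V := Hd' y ltac:(lra)).
      assert (0 <= Rabs (fl y - fnp F y0 v0 N y)) by apply Rabs_pos.
      assert (0 <= Rabs (fl x0 - fnp F y0 v0 N x0)) by apply Rabs_pos.
      replace (pl y - pl x0) with ((pl y - pnp F y0 v0 N y) + (pnp F y0 v0 N y - pnp F y0 v0 N x0) - (pl x0 - pnp F y0 v0 N x0)) by ring.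
      eapply Rle_lt_trans. apply abs3. lra. }
  destruct Hcont as [Cfl Cpl].
  assert (CF : cont_all (fun s => F (fl s) (pl s))) by (apply (cont_F F K); auto).
  assert (Ieq : forall x, fl x = y0 + RInt pl 0 x /\ pl x = v0 + RInt (fun s => F (fl s) (pl s)) 0 x).
  { intros x. set (T := Rabs x). assert (HT : 0 <= T) by apply Rabs_pos.
    split; apply eq_eps; intros e He;
    (destruct (Htau T HT (e / (2 + K * T + T))) as [N HN]; [apply Rdiv_lt_0_compat; nra|]);
    assert (HN1 := HN N (le_n N)); assert (HN2 := HN (S N) (le_S _ _ (le_n N)));
    assert (Hpos : 0 < 2 + K * T + T) by nra;
    assert (Hsmall : (SW T - psum (W T) N) * (2 + K * T + T) < e)
      by (apply Rmult_lt_reg_r with (/ (2 + K*T+T)); [apply Rinv_0_lt_compat; lra|];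
          rewrite Rmult_assoc, Rinv_r by lra; lra);
    destruct (HC N) as [CfN CpN];
    assert (HuS := Hunif T x (S N) (Rle_refl _));
    assert (Hps : psum (W T) N <= psum (W T) (S N)) by (apply psum_mono; auto);
    assert (0 <= Rabs (fl x - fnp F y0 v0 (S N) x)) by apply Rabs_pos;
    assert (0 <= Rabs (pl x - pnp F y0 v0 (S N) x)) by apply Rabs_pos.
    - assert (B := RInt_pow_bound (fun s => pnp F y0 v0 N s - pl s) x (SW T - psum (W T) N) 0).
      rewrite <- RInt_diff in B; auto.
      assert (Hb : Rabs (RInt (pnp F y0 v0 N) 0 x - RInt pl 0 x) <= (SW T - psum (W T) N) * T).
      { eapply Rle_trans. apply B. intros s. apply continuity_pt_minus; auto.
        intros s Hs. simpl. rewrite Rmult_1_r.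
        assert (HsT : Rabs s <= T).
        { unfold T. destruct (Rle_dec 0 x).
          rewrite Rmin_left, Rmax_right in Hs by lra. rewrite !Rabs_right by lra. lra.
          rewrite Rmin_right, Rmax_left in Hs by lra. rewrite !Rabs_left1 by lra. lra. }
        assert (U := Hunif T s N HsT). rewrite <- Rabs_Ropp.
        replace (- (pnp F y0 v0 N s - pl s)) with (pl s - pnp F y0 v0 N s) by ring.
        assert (0 <= Rabs (fl s - fnp F y0 v0 N s)) by apply Rabs_pos. lra.
        simpl. unfold T. right. field. }
      rewrite fnp_S in HuS.
      replace (fl x - (y0 + RInt pl 0 x)) with ((fl x - (y0 + RInt (pnp F y0 v0 N) 0 x)) + (RInt (pnp F y0 v0 N) 0 x - RInt pl 0 x)) by ring.
      eapply Rle_trans. apply Rabs_triang. 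
      assert ((SW T - psum (W T) N) * T + (SW T - psum (W T) N) <= (SW T - psum (W T) N) * (2 + K*T + T)).
      { assert (0 <= K * T) by nra. nra. }
      lra.
    - set (G := fun s => F (fnp F y0 v0 N s) (pnp F y0 v0 N s)).
      assert (CG : cont_all G) by (apply (cont_F F K); auto).
      assert (B := RInt_pow_bound (fun s => G s - F (fl s) (pl s)) x (K * (SW T - psum (W T) N)) 0).
      rewrite <- RInt_diff in B; auto.
      assert (Hb : Rabs (RInt G 0 x - RInt (fun s => F (fl s) (pl s)) 0 x) <= K * (SW T - psum (W T) N) * T).
      { eapply Rle_trans. apply B. intros s. apply continuity_pt_minus; auto.
        intros s Hs. simpl. rewrite Rmult_1_r.
        assert (HsT : Rabs s <= T).
        { unfold T. destruct (Rle_dec 0 x).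
          rewrite Rmin_left, Rmax_right in Hs by lra. rewrite !Rabs_right by lra. lra.
          rewrite Rmin_right, Rmax_left in Hs by lra. rewrite !Rabs_left1 by lra. lra. }
        assert (U := Hunif T s N HsT). unfold G. eapply Rle_trans. apply HF.
        apply Rmult_le_compat_l; auto.
        rewrite <- (Rabs_Ropp (fnp F y0 v0 N s - fl s)), <- (Rabs_Ropp (pnp F y0 v0 N s - pl s)).
        replace (- (fnp F y0 v0 N s - fl s)) with (fl s - fnp F y0 v0 N s) by ring.
        replace (- (pnp F y0 v0 N s - pl s)) with (pl s - pnp F y0 v0 N s) by ring. lra.
        simpl. unfold T. right. field. }
      rewrite pnp_S in HuS.
      replace (pl x - (v0 + RInt (fun s => F (fl s) (pl s)) 0 x)) with ((pl x - (v0 + RInt G 0 x)) + (RInt G 0 x - RInt (fun s => F (fl s) (pl s)) 0 x)) by (unfold G; ring).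
      eapply Rle_trans. apply Rabs_triang. unfold G in *.
      assert ((K * (SW T - psum (W T) N)) * T + (SW T - psum (W T) N) <= (SW T - psum (W T) N) * (2 + K*T + T)).
      { assert (0 <= T * (SW T - psum (W T) N)) by nra. nra. }
      lra. }
  exists fl, pl.
  assert (Ef : fl = fun x => y0 + RInt pl 0 x) by (apply functional_extensionality; intros x; apply Ieq).
  assert (Ep : pl = fun x => v0 + RInt (fun s => F (fl s) (pl s)) 0 x) by (apply functional_extensionality; intros x; apply Ieq).
  split; [|split; [|split]].
  - intros x. rewrite Ef at 1. apply prim_deriv; auto.
  - intros x. rewrite Ep at 1. apply (prim_deriv v0 (fun s => F (fl s) (pl s))); auto.
  - rewrite (proj1 (Ieq 0)). rewrite RInt_point. unfold zero; simpl. ring.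
  - rewrite (proj2 (Ieq 0)). rewrite RInt_point. unfold zero; simpl. ring.
Qed.

Definition GT (P : R -> R) (a r th0 : R) (f p : R -> R) : Prop :=
  (forall x, is_derive f x (p x)) /\ (forall x, 0 <= x -> is_derive p x (a * p x - P (f x))) /\
  f 0 = th0 /\ p 0 = a * (th0 + r) /\ (forall x, 0 <= x -> 0 <= f x <= 1) /\
  is_lim f p_infty 1 /\ is_lim p p_infty 0.

Definition Pgood (P : R -> R) L := 0 <= L /\ (forall u, 0 <= P u) /\ (forall u, u < 1 -> 0 < P u) /\
  P 1 = 0 /\ (forall u v, Rabs (P u - P v) <= L * Rabs (u - v)).

Lemma exp_ge1 x : 0 <= x -> 1 <= exp x.
Proof. intros H. rewrite <- exp_0. destruct (Req_dec x 0) as [->|]; [lra|]. left; apply exp_increasing; lra. Qed.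

Lemma h_deriv (f p : R -> R) P a x : is_derive p x (a * p x - P (f x)) ->
  is_derive (fun y => exp (-(a*y)) * p y) x (- (exp (-(a*x)) * P (f x))).
Proof.
  intros Hp. auto_derive. exists (a * p x - P (f x)); auto.
  derf p x (a * p x - P (f x)) Hp. ring.
Qed.

Lemma lim_eventually f l : is_lim f p_infty (Finite l) -> forall e, 0 < e -> forall X, exists x, X < x /\ Rabs (f x - l) < e.
Proof.
  intros H e He X. destruct (lim_p_elim f l H e He) as [M HM].
  exists (Rmax M X + 1). split. assert (X <= Rmax M X) by apply Rmax_r. lra.
  apply HM. assert (M <= Rmax M X) by apply Rmax_l. lra.
Qed.

Lemma Rabs_eps_eq a b : (forall e, 0 < e -> Rabs (a - b) < e) -> a = b.
Proof.
  intros H. destruct (Req_dec a b) as [|Hne]; auto. exfalso.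
  assert (Hp : 0 < Rabs (a - b)) by (apply Rabs_pos_lt; lra).
  specialize (H (Rabs (a - b)) Hp). lra.
Qed.

Lemma Rmult_le_0_r_neg a b : 0 <= a -> b < 0 -> a * b <= 0.
Proof. intros. nra. Qed.

Lemma GT_p_nonneg P L a r th0 f p : Pgood P L -> 0 <= a -> GT P a r th0 f p ->
  forall x, 0 <= x -> 0 <= p x.
Proof.
  intros [HL [Hnn [Hpos [H1 Hlip]]]] Ha [Hf [Hp [H0 [Hp0 [Hr [Hlf Hlp]]]]]] x0 Hx0.
  destruct (Rle_dec 0 (p x0)) as [|Hn]; auto. exfalso.
  set (h := fun y => exp (-(a*y)) * p y).
  assert (Hh : forall y, x0 <= y -> h y <= h x0).
  { intros y Hy. apply (anti_deriv h (fun y => - (exp (-(a*y)) * P (f y)))); auto.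
    intros z Hz. apply h_deriv. apply Hp. lra.
    intros z Hz. assert (0 < exp (-(a*z))) by apply exp_pos. specialize (Hnn (f z)). nra. }
  assert (Hn' : p x0 < 0) by lra.
  assert (Hh0 : h x0 < 0) by (unfold h; assert (0 < exp (-(a*x0))) by apply exp_pos; nra).
  destruct (lim_eventually p 0 Hlp (- h x0) ltac:(lra) x0) as [y [Hy1 Hy2]].
  specialize (Hh y ltac:(lra)). unfold h in Hh.
  assert (E : p y = exp (a*y) * (exp (-(a*y)) * p y)).
  { rewrite <- Rmult_assoc, <- exp_plus. replace (a*y + -(a*y)) with 0 by ring. rewrite exp_0. ring. }
  assert (He1 : 1 <= exp (a*y)) by (apply exp_ge1; nra).
  assert (p y <= h x0).
  { rewrite E. apply Rle_trans with (exp (a*y) * h x0). apply Rmult_le_compat_l. lra. unfold h; lra.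
    assert (HH : exp (a*y) * h x0 - h x0 = (exp (a*y) - 1) * h x0) by ring.
    assert ((exp (a*y) - 1) * h x0 <= 0). { apply Rmult_le_0_r_neg; lra. } lra. }
  rewrite Rminus_0_r in Hy2. apply Rabs_def2 in Hy2. lra.
Qed.

Lemma GT_f_lt1 P L a r th0 f p : Pgood P L -> 0 <= a -> th0 < 1 -> GT P a r th0 f p ->
  forall x, 0 <= x -> f x < 1.
Proof.
  intros HP Ha Hth HG. pose proof HP as [HL [Hnn [Hpos [H1 Hlip]]]].
  pose proof HG as [Hf [Hp [H0 [Hp0 [Hr [Hlf Hlp]]]]]].
  intros xs Hxs. destruct (Rlt_dec (f xs) 1) as [|Hn]; auto. exfalso.
  assert (Hf1 : f xs = 1) by (specialize (Hr xs Hxs); lra).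
  assert (Hxs0 : 0 < xs) by (destruct (Req_dec xs 0) as [->|]; lra).
  assert (Hpn := GT_p_nonneg P L a r th0 f p HP Ha HG xs (or_introl Hxs0)).
  assert (Hpx : p xs = 0).
  { destruct (Req_dec (p xs) 0); auto. exfalso.
    destruct (cont_gt p xs 0) as [d [Hd Hd']]. apply (der_cont _ (a * p xs - P (f xs))). apply Hp; lra. lra.
    assert (f xs < f (xs + d/2)).
    { apply (smono_deriv f p). lra. intros; apply Hf. intros z Hz. apply Hd'. rewrite Rabs_right; lra. }
    specialize (Hr (xs + d/2) ltac:(lra)). lra. }
  destruct (back_uniq P L a f p xs HL Ha Hlip H1 (or_introl Hxs0)) as [Hb _]; auto.
  intros x Hx. split; auto. apply Hp; lra.
  lra.
Qed.

Lemma GT_p_pos P L a r th0 f p : Pgood P L -> 0 <= a -> th0 < 1 -> GT P a r th0 f p ->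
  forall x, 0 <= x -> 0 < p x.
Proof.
  intros HP Ha Hth HG. pose proof HP as [HL [Hnn [Hpos [H1 Hlip]]]].
  pose proof HG as [Hf [Hp [H0 [Hp0 [Hr [Hlf Hlp]]]]]].
  assert (Hlt := GT_f_lt1 P L a r th0 f p HP Ha Hth HG).
  assert (Hnng := GT_p_nonneg P L a r th0 f p HP Ha HG).
  intros x1 Hx1. destruct (Req_dec (p x1) 0) as [Hz|]; [|specialize (Hnng x1 Hx1); lra]. exfalso.
  set (h := fun y => exp (-(a*y)) * p y).
  assert (Hzero : forall y, x1 <= y -> p y = 0).
  { intros y Hy. assert (h y <= h x1).
    { apply (anti_deriv h (fun y => - (exp (-(a*y)) * P (f y)))); auto.
      intros z Hz'. apply h_deriv. apply Hp. lra.
      intros z Hz'. assert (0 < exp (-(a*z))) by apply exp_pos. specialize (Hnn (f z)). nra. }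
    unfold h in H. rewrite Hz, Rmult_0_r in H. assert (0 < exp (-(a*y))) by apply exp_pos.
    specialize (Hnng y ltac:(lra)). nra. }
  assert (Hconst : forall y, x1 <= y -> f y = f x1).
  { intros y Hy. apply Rle_antisym.
    - apply (anti_deriv f p); auto. intros; rewrite Hzero; lra.
    - apply (mono_deriv f p); auto. intros; rewrite Hzero; lra. }
  assert (Hfx1 : f x1 = 1).
  { apply Rabs_eps_eq. intros e He. destruct (lim_eventually f 1 Hlf e He x1) as [y [Hy1 Hy2]].
    rewrite Hconst in Hy2 by lra. lra. }
  specialize (Hlt x1 Hx1). lra.
Qed.

Lemma inv_deriv (f p tau : R -> R) y1 y : (forall x, is_derive f x (p x)) ->
  (forall x, 0 <= x -> 0 < p x) -> (forall u v, 0 <= u -> u < v -> f u < f v) ->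
  (forall z, f 0 <= z < y1 -> 0 <= tau z /\ f (tau z) = z) -> f 0 < y < y1 ->
  is_derive tau y (1 / p (tau y)).
Proof.
  intros Hd Hp Hinc Ht Hy.
  assert (Hmono : forall z1 z2, f 0 <= z1 <= z2 -> z2 < y1 -> tau z1 <= tau z2).
  { intros z1 z2 Hz1 Hz2. destruct (Rle_dec (tau z1) (tau z2)) as [|Hn]; auto. exfalso.
    destruct (Ht z1 ltac:(lra)) as [A1 B1]. destruct (Ht z2 ltac:(lra)) as [A2 B2].
    assert (f (tau z2) < f (tau z1)) by (apply Hinc; lra). lra. }
  set (u := (y + y1) / 2).
  destruct (Ht u ltac:(unfold u; lra)) as [Hu1 Hu2].
  assert (Htu : 0 < tau u).
  { destruct (Req_dec (tau u) 0) as [E|]; [|lra]. rewrite E in Hu2. unfold u in Hu2. lra. }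
  assert (Hcf : forall a, continuity_pt f a) by (intros a; apply (der_cont f (p a)); auto).
  assert (Hct : continuity_pt tau y).
  { assert (A1 : forall x z, 0 <= x -> x < z -> z <= tau u -> f x < f z) by (intros x z Hx Hxz Hz; apply Hinc; lra).
    assert (A2 : forall x, f 0 <= x -> x <= f (tau u) -> comp f tau x = id x).
    { intros x Hx1 Hx2. rewrite Hu2 in Hx2. unfold comp, id. apply Ht. unfold u in *; lra. }
    assert (A3 : forall x, f 0 <= x -> x <= f (tau u) -> 0 <= tau x <= tau u).
    { intros x Hx1 Hx2. rewrite Hu2 in Hx2. split. apply Ht; unfold u in *; lra.
      apply Hmono; unfold u in *; lra. }
    assert (A4 : forall a, 0 <= a <= tau u -> continuity_pt f a) by (intros; apply Hcf).
    assert (A5 : f 0 < y < f (tau u)) by (rewrite Hu2; unfold u; lra).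
    exact (Ranalysis5.continuity_pt_recip_interv f tau 0 (tau u) Htu A1 A2 A3 A4 y A5). }
  assert (Prf : forall a, tau (f 0) <= a <= tau u -> derivable_pt f a).
  { intros a _. apply ex_derive_Reals_0. exists (p a). apply Hd. }
  assert (Prg : tau (f 0) <= tau y <= tau u).
  { split; apply Hmono; unfold u in *; lra. }
  assert (Hcomp : forall x0, f 0 <= x0 <= u -> comp f tau x0 = id x0).
  { intros x0 Hx0. unfold comp, id. apply Ht. unfold u in *; lra. }
  assert (HD : derive_pt f (tau y) (Prf (tau y) Prg) = p (tau y)).
  { apply derive_pt_eq_0. apply is_derive_Reals. apply Hd. }
  assert (Hne : derive_pt f (tau y) (Prf (tau y) Prg) <> 0).
  { rewrite HD. assert (0 < p (tau y)) by (apply Hp; apply Ht; lra). lra. }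
  assert (R := Ranalysis5.derivable_pt_lim_recip_interv f tau (f 0) u y Prf Hct ltac:(unfold u; lra) ltac:(unfold u; lra) Prg Hcomp Hne).
  rewrite HD in R. apply is_derive_Reals. exact R.
Qed.

Lemma GT_incr P L a r th0 f p : Pgood P L -> 0 <= a -> th0 < 1 -> GT P a r th0 f p ->
  forall u v, 0 <= u -> u < v -> f u < f v.
Proof.
  intros HP Ha Hth HG u v Hu Huv. pose proof HG as [Hf _].
  apply (smono_deriv f p). exact Huv. intros x _; apply Hf.
  intros x Hx. apply (GT_p_pos P L a r th0 f p HP Ha Hth HG). lra.
Qed.

Lemma compare P L a1 a2 r th1 th2 f1 p1 f2 p2 : Pgood P L -> 0 <= r -> 0 < a2 -> a2 < a1 ->
  0 <= th2 -> th2 < th1 -> th1 < 1 -> GT P a1 r th1 f1 p1 -> GT P a2 r th2 f2 p2 -> False.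
Proof.
  intros HP Hr Ha2 Ha12 Hth2 Hth12 Hth1 HG1 HG2.
  pose proof HP as [HL [Hnn [Hpos [H1 Hlip]]]].
  pose proof HG1 as [Hf1 [Hp1 [H01 [Hp01 [Hr1 [Hlf1 Hlp1]]]]]].
  pose proof HG2 as [Hf2 [Hp2 [H02 [Hp02 [Hr2 [Hlf2 Hlp2]]]]]].
  assert (Hp2pos := GT_p_pos P L a2 r th2 f2 p2 HP ltac:(lra) ltac:(lra) HG2).
  assert (Hf2lt := GT_f_lt1 P L a2 r th2 f2 p2 HP ltac:(lra) ltac:(lra) HG2).
  assert (Hinc2 := GT_incr P L a2 r th2 f2 p2 HP ltac:(lra) ltac:(lra) HG2).
  assert (Hp1pos := GT_p_pos P L a1 r th1 f1 p1 HP ltac:(lra) ltac:(lra) HG1).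
  assert (Hf1lt := GT_f_lt1 P L a1 r th1 f1 p1 HP ltac:(lra) ltac:(lra) HG1).
  assert (Hinc1 := GT_incr P L a1 r th1 f1 p1 HP ltac:(lra) ltac:(lra) HG1).
  assert (Hf1ge : forall x, 0 <= x -> th1 <= f1 x).
  { intros x Hx. rewrite <- H01. destruct (Req_dec x 0) as [->|]; [lra|]. left; apply Hinc1; lra. }
  assert (Hex : forall z, th2 <= z < 1 -> exists x, 0 <= x /\ f2 x = z).
  { intros z Hz. destruct (lim_eventually f2 1 Hlf2 (1 - z) ltac:(lra) 0) as [X [HX1 HX2]].
    apply Rabs_def2 in HX2.
    destruct (IVT_cor (fun x => f2 x - z) 0 X) as [x [Hx1 Hx2]].
    - intros x. apply continuity_pt_minus. apply (der_cont f2 (p2 x)); auto. apply continuity_pt_const. intros a b; auto.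
    - lra.
    - cbv beta. rewrite H02. replace ((th2 - z) * (f2 X - z)) with (- ((z - th2) * (f2 X - z))) by ring.
      assert (0 <= (z - th2) * (f2 X - z)) by (apply Rmult_le_pos; lra). lra.
    - exists x. split. lra. lra. }
  set (tau := fun z => epsilon (inhabits 0) (fun x => 0 <= x /\ f2 x = z)).
  assert (Ht : forall z, th2 <= z < 1 -> 0 <= tau z /\ f2 (tau z) = z).
  { intros z Hz. unfold tau. apply epsilon_spec. apply Hex; auto. }
  clearbody tau.
  set (P2 := fun z => p2 (tau z)).
  assert (HP2pos : forall z, th2 <= z < 1 -> 0 < P2 z).
  { intros z Hz. unfold P2. apply Hp2pos. apply Ht; auto. }
  assert (HP2d : forall z, th2 < z < 1 -> is_derive P2 z (a2 - P z / P2 z)).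
  { intros z Hz. destruct (Ht z ltac:(lra)) as [Hz1 Hz2].
    assert (Dt : is_derive tau z (1 / p2 (tau z))).
    { apply (inv_deriv f2 p2 tau 1 z); auto. intros; apply Ht; lra. lra. }
    assert (Dp : is_derive p2 (tau z) (a2 * p2 (tau z) - P (f2 (tau z)))) by (apply Hp2; auto).
    assert (D := is_derive_comp p2 tau z _ _ Dp Dt).
    assert (Hpz : 0 < p2 (tau z)) by (apply Hp2pos; auto).
    replace (a2 - P z / P2 z) with (scal (1 / p2 (tau z)) (a2 * p2 (tau z) - P (f2 (tau z)))).
    exact D.
    unfold scal; simpl; unfold mult; simpl. rewrite Hz2. unfold P2. field. lra. }
  set (W := fun x => p1 x - P2 (f1 x)).
  set (dW := fun x => (a1 * p1 x - P (f1 x)) - p1 x * (a2 - P (f1 x) / P2 (f1 x))).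
  assert (HdW : forall x, 0 <= x -> is_derive W x (dW x)).
  { intros x Hx.
    assert (Hfx : th2 < f1 x < 1) by (split; [specialize (Hf1ge x Hx); lra| apply Hf1lt; auto]).
    assert (D1 := is_derive_comp P2 f1 x _ _ (HP2d (f1 x) Hfx) (Hf1 x)).
    assert (D := is_derive_minus p1 (fun y => P2 (f1 y)) x _ _ (Hp1 x Hx) D1).
    unfold W, dW. unfold minus, plus, opp, scal in D; simpl in D. unfold mult in D; simpl in D.
    replace (a1 * p1 x - P (f1 x) - p1 x * (a2 - P (f1 x) / P2 (f1 x))) with
      (a1 * p1 x - P (f1 x) + - (p1 x * (a2 - P (f1 x) / P2 (f1 x)))) by ring.
    exact D. }
  assert (HWpos : forall x, 0 <= x -> 0 < W x -> 0 < dW x).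
  { intros x Hx HWx.
    assert (Hfx : th2 <= f1 x < 1) by (split; [specialize (Hf1ge x Hx); lra| apply Hf1lt; auto]).
    assert (HP2x := HP2pos (f1 x) Hfx). assert (Hpx := Hp1pos x Hx). assert (HPx := Hnn (f1 x)).
    assert (E : dW x = (a1 - a2) * p1 x + P (f1 x) * W x / P2 (f1 x)).
    { unfold dW, W. field. lra. }
    rewrite E. assert (0 <= P (f1 x) * W x / P2 (f1 x)).
    { unfold Rdiv. apply Rmult_le_pos. nra. left; apply Rinv_0_lt_compat; lra. }
    assert (0 < (a1 - a2) * p1 x) by nra. lra. }
  assert (HW0 : 0 < W 0).
  { destruct (Ht th1 ltac:(lra)) as [Ht01 Ht02].
    set (t0 := tau th1) in *.
    assert (Ht0 : 0 < t0) by (destruct (Req_dec t0 0) as [E|]; [rewrite E, H02 in Ht02; lra| lra]).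
    assert (Hg : p2 t0 - a2 * f2 t0 < p2 0 - a2 * f2 0).
    { apply (santi_deriv (fun x => p2 x - a2 * f2 x) (fun x => - P (f2 x))); auto.
      - intros x Hx. assert (D := is_derive_minus p2 (fun y => a2 * f2 y) x _ _ (Hp2 x ltac:(lra))
           (is_derive_scal f2 x a2 _ (Hf2 x))).
        unfold minus, plus, opp, scal in D; simpl in D; unfold mult in D; simpl in D.
        replace (- P (f2 x)) with (a2 * p2 x - P (f2 x) + - (a2 * p2 x)) by ring. exact D.
      - intros x Hx. assert (0 < P (f2 x)) by (apply Hpos; apply Hf2lt; lra). lra. }
    unfold W, P2. rewrite H01. fold t0. rewrite Ht02, H02, Hp02 in Hg. rewrite Hp01.
    assert (0 < (a1 - a2) * (th1 + r)) by (apply Rmult_lt_0_compat; lra). nra. }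
  assert (Hstay := stay_pos W dW HdW HWpos HW0).
  destruct (lim_eventually p1 0 Hlp1 (W 0) HW0 0) as [x [Hx1 Hx2]].
  rewrite Rminus_0_r in Hx2. apply Rabs_def2 in Hx2.
  specialize (Hstay x ltac:(lra)).
  assert (Hfx : th2 <= f1 x < 1) by (split; [specialize (Hf1ge x ltac:(lra)); lra| apply Hf1lt; lra]).
  assert (HP2x := HP2pos (f1 x) Hfx). change (W x) with (p1 x - P2 (f1 x)) in Hstay. lra.
Qed.

Lemma deriv_pos_right g x d d0 : is_derive g x d -> 0 < d -> 0 < d0 ->
  exists y, x < y < x + d0 /\ g x < g y.
Proof.
  intros Hd Hpos Hd0. apply is_derive_Reals in Hd.
  destruct (Hd (d/2)) as [del Hdel]. lra.
  set (h := Rmin del d0 / 2).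
  assert (0 < Rmin del d0) by (apply Rmin_glb_lt; [apply cond_pos|lra]).
  assert (Rmin del d0 <= del) by apply Rmin_l. assert (Rmin del d0 <= d0) by apply Rmin_r.
  specialize (Hdel h). exists (x + h).
  assert (Habs : Rabs ((g (x + h) - g x) / h - d) < d / 2).
  { apply Hdel. unfold h; lra. unfold h. rewrite Rabs_right by lra. lra. }
  apply Rabs_def2 in Habs. split. unfold h; lra.
  assert (0 < (g (x + h) - g x) / h) by lra.
  assert (0 < h) by (unfold h; lra).
  assert ((g (x + h) - g x) / h * h = g (x + h) - g x) by (field; lra).
  nra.
Qed.

Lemma deriv_neg_right g x d d0 : is_derive g x d -> d < 0 -> 0 < d0 ->
  exists y, x < y < x + d0 /\ g y < g x.
Proof.
  intros Hd Hneg Hd0.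
  destruct (deriv_pos_right (fun y => - g y) x (- d) d0) as [y [Hy1 Hy2]]; try lra.
  apply (is_derive_opp g x d Hd).
  exists y. split; auto. lra.
Qed.

Lemma sq_lt_abs u m : 0 < m -> u^2 < m^2 -> Rabs u < m.
Proof.
  intros Hm H. destruct (Rlt_dec (Rabs u) m) as [|Hn]; auto. exfalso.
  assert (m <= Rabs u) by lra. 
  assert (Hq : m^2 <= Rabs u ^2) by (apply pow_incr; lra).
  rewrite pow2_abs in Hq. lra.
Qed.

Lemma cont_max_lt (g : R -> R) x v : 0 <= x -> (forall y, continuity_pt g y) ->
  (forall y, 0 <= y <= x -> g y < v) -> exists m, m < v /\ forall y, 0 <= y <= x -> g y <= m.
Proof.
  intros Hx Hc H. destruct (continuity_ab_maj g 0 x Hx) as [M [HM HM']]. intros; apply Hc.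
  exists (g M). split. apply H; auto. auto.
Qed.

Lemma cont_min_gt (g : R -> R) x v : 0 <= x -> (forall y, continuity_pt g y) ->
  (forall y, 0 <= y <= x -> v < g y) -> exists m, v < m /\ forall y, 0 <= y <= x -> m <= g y.
Proof.
  intros Hx Hc H. destruct (continuity_ab_min g 0 x Hx) as [M [HM HM']]. intros; apply Hc.
  exists (g M). split. apply H; auto. auto.
Qed.

Lemma Pgood_cont P L : Pgood P L -> forall u, continuity_pt P u.
Proof. intros [HL [_ [_ [_ Hl]]]]. apply (lip_cont P L HL Hl). Qed.

Lemma limits_lemma P L a f p : Pgood P L -> 0 < a ->
  (forall x, is_derive f x (p x)) -> (forall x, is_derive p x (a * p x - P (f x))) ->
  0 <= f 0 -> (forall x, 0 <= x -> 0 < p x /\ f x < 1) ->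
  is_lim f p_infty 1 /\ is_lim p p_infty 0.
Proof.
  intros HP Ha Hf Hp Hf0 Hpf.
  pose proof HP as [HL [Hnn [Hpos [H1 Hlip]]]].
  assert (HPc := Pgood_cont P L HP).
  assert (Hinc : forall u v, 0 <= u -> u < v -> f u < f v).
  { intros u v Hu Huv. apply (smono_deriv f p). exact Huv. intros; apply Hf. intros x Hx; apply Hpf; lra. }
  assert (Hfge : forall x, 0 <= x -> f 0 <= f x).
  { intros x Hx. destruct (Req_dec x 0) as [->|]; [lra|]. left; apply Hinc; lra. }
  assert (C1 : forall e, 0 < e -> exists X, 0 <= X /\ 1 - e < f X).
  { intros e He. destruct (Rlt_dec (1 - e) (f 0)) as [|Hn]. exists 0; split; lra.
    apply NNPP. intros Hne.
    assert (Hall : forall x, 0 <= x -> f x <= 1 - e).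
    { intros x Hx. destruct (Rle_dec (f x) (1 - e)) as [|Hn2]; auto. exfalso. apply Hne. exists x; split; lra. }
    destruct (continuity_ab_min P 0 (1 - e)) as [um [Hum1 Hum2]]. lra. intros; apply HPc.
    set (m := P um). assert (Hm : 0 < m) by (unfold m; apply Hpos; lra).
    assert (HPf : forall x, 0 <= x -> m <= P (f x)).
    { intros x Hx. apply Hum1. specialize (Hall x Hx). specialize (Hfge x Hx). lra. }
    assert (Hx2 : exists x2, 0 <= x2 /\ p x2 < m / (2*a)).
    { apply NNPP. intros Hn2.
      assert (Hge : forall x, 0 <= x -> m / (2*a) <= p x).
      { intros x Hx. destruct (Rle_dec (m/(2*a)) (p x)) as [|Hn3]; auto. exfalso. apply Hn2. exists x; split; lra. }
      set (X := 4 * a / m).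
      assert (HX : 0 < X) by (unfold X; apply Rdiv_lt_0_compat; lra).
      assert (Hg : f 0 - m/(2*a) * 0 <= f X - m/(2*a) * X).
      { apply (mono_deriv (fun x => f x - m/(2*a) * x) (fun x => p x - m/(2*a))). lra.
        intros x Hx. auto_derive. exists (p x); auto. derf f x (p x) (Hf x). ring.
        intros x Hx. specialize (Hge x ltac:(lra)). lra. }
      assert (m / (2*a) * X = 2) by (unfold X; field; lra).
      specialize (Hpf X ltac:(lra)). lra. }
    destruct Hx2 as [x2 [Hx21 Hx22]].
    set (y := x2 + ln 2 / a).
    assert (Hln : 0 < ln 2) by (rewrite <- ln_1; apply ln_increasing; lra).
    assert (Hy : x2 < y) by (unfold y; assert (0 < ln 2 / a) by (apply Rdiv_lt_0_compat; lra); lra).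
    assert (Hw : exp (-(a*y)) * (p y - m/a) <= exp (-(a*x2)) * (p x2 - m/a)).
    { apply (anti_deriv (fun x => exp (-(a*x)) * (p x - m/a)) (fun x => exp (-(a*x)) * (m - P (f x)))). lra.
      intros x Hx. auto_derive. exists (a * p x - P (f x)); auto. derf p x (a * p x - P (f x)) (Hp x). field. lra.
      intros x Hx. assert (0 < exp (-(a*x))) by apply exp_pos. specialize (HPf x ltac:(lra)).
      assert (m - P (f x) <= 0) by lra. nra. }
    assert (Hey : exp (-(a*y)) = exp (-(a*x2)) / 2).
    { unfold y. replace (-(a * (x2 + ln 2 / a))) with (-(a*x2) + - ln 2) by (field; lra).
      rewrite exp_plus, (exp_Ropp (ln 2)), exp_ln by lra. field. }
    rewrite Hey in Hw. assert (Hex2 : 0 < exp (-(a*x2))) by apply exp_pos.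
    assert (Hq : (p y - m/a) <= 2 * (p x2 - m/a)).
    { apply Rmult_le_reg_l with (exp (-(a*x2)) / 2). apply Rdiv_lt_0_compat; lra.
      assert (Eq : exp (- (a * x2)) / 2 * (2 * (p x2 - m / a)) = exp (- (a * x2)) * (p x2 - m / a)) by (field; lra).
      rewrite Eq. lra. }
    assert (Hma : m / (2*a) * 2 = m / a) by (field; lra).
    specialize (Hpf y ltac:(lra)). lra. }
  assert (Lf : is_lim f p_infty 1).
  { apply lim_p_intro. intros e He. destruct (C1 e He) as [X [HX1 HX2]]. exists X.
    intros x Hx. assert (f X < f x) by (apply Hinc; lra). specialize (Hpf x ltac:(lra)).
    rewrite Rabs_left by lra. lra. }
  split; auto.
  apply lim_p_intro. intros e He.
  destruct (cont_lt P 1 (a * e) (HPc 1)) as [d [Hd Hd']]. rewrite H1. nra.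
  destruct (lim_p_elim f 1 Lf d Hd) as [X1 HX1].
  set (X := Rmax X1 0). exists X. intros x Hx.
  assert (HX0 : 0 <= X) by apply Rmax_r. assert (HXX1 : X1 <= X) by apply Rmax_l.
  assert (HPsmall : forall z, X < z -> P (f z) < a * e).
  { intros z Hz. apply Hd'. apply HX1. lra. }
  destruct (Hpf x ltac:(lra)) as [Hpx _].
  rewrite Rminus_0_r, Rabs_right by lra.
  destruct (Rlt_dec (p x) e) as [|Hn]; auto. exfalso.
  assert (Hge : forall z, x <= z -> e <= p z).
  { intros z Hz.
    assert (Hw : exp (-(a*x)) * (p x - e) <= exp (-(a*z)) * (p z - e)).
    { apply (mono_deriv (fun y => exp (-(a*y)) * (p y - e)) (fun y => exp (-(a*y)) * (a * e - P (f y)))). lra.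
      intros y Hy. auto_derive. exists (a * p y - P (f y)); auto. derf p y (a * p y - P (f y)) (Hp y). field.
      intros y Hy. assert (0 < exp (-(a*y))) by apply exp_pos. specialize (HPsmall y ltac:(lra)). nra. }
    assert (0 < exp (-(a*x))) by apply exp_pos. assert (0 < exp (-(a*z))) by apply exp_pos.
    assert (0 <= exp (-(a*x)) * (p x - e)) by nra. 
    destruct (Rle_dec e (p z)) as [|Hn2]; auto. exfalso.
    assert (exp (-(a*z)) * (p z - e) < 0) by nra. lra. }
  set (y := x + 2 / e).
  assert (Hy : x < y) by (unfold y; assert (0 < 2 / e) by (apply Rdiv_lt_0_compat; lra); lra).
  assert (Hg : f x - e * x <= f y - e * y).
  { apply (mono_deriv (fun z => f z - e * z) (fun z => p z - e)). lra.
    intros z Hz. auto_derive. exists (p z); auto. derf f z (p z) (Hf z). ring.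
    intros z Hz. specialize (Hge z ltac:(lra)). lra. }
  assert (e * y = e * x + 2) by (unfold y; field; lra).
  assert (0 <= f x) by (specialize (Hfge x ltac:(lra)); lra).
  specialize (Hpf y ltac:(lra)). lra.
Qed.

Lemma classify P L a f p : Pgood P L -> 0 <= a ->
  (forall x, is_derive f x (p x)) -> (forall x, is_derive p x (a * p x - P (f x))) ->
  f 0 < 1 -> 0 < p 0 ->
  ~ (exists x, 0 <= x /\ p x < 0 /\ forall y, 0 <= y <= x -> f y < 1) ->
  ~ (exists x, 0 <= x /\ 1 < f x /\ forall y, 0 <= y <= x -> 0 < p y) ->
  forall x, 0 <= x -> 0 < p x /\ f x < 1.
Proof.
  intros HP Ha Hf Hp Hf0 Hp0 HnA HnB x1 Hx1.
  pose proof HP as [HL [Hnn [Hpos [H1 Hlip]]]].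
  assert (Cf : forall x, continuity_pt f x) by (intros x; apply (der_cont f (p x)); auto).
  assert (Cp : forall x, continuity_pt p x) by (intros x; apply (der_cont p (a * p x - P (f x))); auto).
  apply NNPP. intros HnQ.
  destruct (first_fail (fun y => 0 < p y /\ f y < 1) x1) as [x0 [Hx0 [Hb Hn0]]]; auto.
  - intros x Hx [Hpx Hfx].
    destruct (cont_gt p x 0 (Cp x) Hpx) as [d1 [Hd1 Hd1']].
    destruct (cont_lt f x 1 (Cf x) Hfx) as [d2 [Hd2 Hd2']].
    exists (Rmin d1 d2). split. apply Rmin_glb_lt; auto.
    assert (Rmin d1 d2 <= d1) by apply Rmin_l. assert (Rmin d1 d2 <= d2) by apply Rmin_r.
    intros y Hy. split; [apply Hd1'|apply Hd2']; rewrite Rabs_right; lra.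
  - assert (Hpx0 : 0 <= p x0).
    { apply (left_ge p x0 x0 0 (Cp x0)). lra. intros y Hy. apply Hb. lra. }
    assert (Hfx0 : 0 <= 1 - f x0).
    { apply (left_ge (fun y => 1 - f y) x0 x0 0). apply continuity_pt_minus; auto.
      apply continuity_pt_const; intros u v; auto. lra. intros y Hy. assert (f y < 1) by (apply Hb; lra). lra. }
    destruct (Req_dec (p x0) 0) as [Hpz|Hpnz].
    + destruct (Req_dec (f x0) 1) as [Hfo|Hfno].
      * destruct (back_uniq P L a f p x0 HL Ha Hlip H1 ltac:(lra)) as [Hb0 _].
        { intros x _; split; auto. } { exact Hfo. } { exact Hpz. } lra.
      * destruct (cont_lt f x0 1 (Cf x0)) as [d [Hd Hd']]. lra.
        destruct (deriv_neg_right p x0 (a * p x0 - P (f x0)) d (Hp x0)) as [y [Hy1 Hy2]]; auto.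
        rewrite Hpz. assert (0 < P (f x0)) by (apply Hpos; lra). lra.
        apply HnA. exists y. split. lra. split. lra.
        intros z Hz. destruct (Rlt_dec z x0). apply Hb; lra. apply Hd'. rewrite Rabs_right; lra.
    + assert (Hfo : f x0 = 1).
      { destruct (Req_dec (f x0) 1); auto. exfalso. apply Hn0. split; lra. }
      destruct (cont_gt p x0 0 (Cp x0)) as [d [Hd Hd']]. lra.
      destruct (deriv_pos_right f x0 (p x0) d (Hf x0)) as [y [Hy1 Hy2]]; auto. lra.
      apply HnB. exists y. split. lra. split. lra.
      intros z Hz. destruct (Rlt_dec z x0). apply Hb; lra. apply Hd'. rewrite Rabs_right; lra.
Qed.

Definition Qsol (P : R -> R) a y0 v0 (fp : (R -> R) * (R -> R)) :=
  (forall x, is_derive (fst fp) x (snd fp x)) /\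
  (forall x, is_derive (snd fp) x (a * snd fp x - P (fst fp x))) /\
  fst fp 0 = y0 /\ snd fp 0 = v0.

Lemma Qsol_ex P L a y0 v0 : Pgood P L -> exists fp, Qsol P a y0 v0 fp.
Proof.
  intros [HL [_ [_ [_ Hlip]]]].
  destruct (ivp_exists (fun u v => a * v - P u) (Rabs a + L) y0 v0) as [f [p [H1 [H2 [H3 H4]]]]].
  - assert (0 <= Rabs a) by apply Rabs_pos. lra.
  - intros u1 v1 u2 v2.
    replace (a * v1 - P u1 - (a * v2 - P u2)) with (a * (v1 - v2) - (P u1 - P u2)) by ring.
    eapply Rle_trans. apply Rabs_triang. rewrite Rabs_Ropp, Rabs_mult.
    specialize (Hlip u1 u2).
    assert (0 <= Rabs a) by apply Rabs_pos. assert (0 <= Rabs (u1 - u2)) by apply Rabs_pos.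
    assert (0 <= Rabs (v1 - v2)) by apply Rabs_pos. nra.
  - exists (f, p). unfold Qsol; simpl. auto.
Qed.

Lemma close_lemma P L eta r cmax (ts : R -> R) (sol : R -> (R -> R) * (R -> R)) :
  Pgood P L -> 0 < eta -> 0 < r -> cmax < 0 ->
  continuous_on_closed ts cmax 0 -> (forall c, cmax <= c <= 0 -> 0 <= ts c <= 1) ->
  (forall c, Qsol P (-eta*c) (ts c) ((-eta*c) * (ts c + r)) (sol c)) ->
  forall c, cmax <= c <= 0 -> forall X, 0 <= X -> forall tau, 0 < tau ->
  exists d, 0 < d /\ forall c', cmax <= c' <= 0 -> Rabs (c' - c) < d ->
    forall x, 0 <= x <= X ->
    (fst (sol c) x - fst (sol c') x)^2 + (snd (sol c) x - snd (sol c') x)^2 < tau.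
Proof.
  intros HP Heta Hr Hcmax Hcont Hrange Hsol c Hc X HX tau Htau.
  pose proof HP as [HL [Hnn [Hpos [H1 Hlip]]]].
  destruct (Hsol c) as [Hf [Hp [Hf0 Hp0]]].
  destruct (continuity_ab_maj (fun y => Rabs (snd (sol c) y)) 0 X HX) as [Mb [HMb _]].
  { intros y _. apply (continuity_pt_comp (snd (sol c)) Rabs). exact (der_cont _ _ _ (Hp y)). apply Rcontinuity_abs. }
  set (B := Rabs (snd (sol c) Mb)).
  assert (HB : 0 <= B) by apply Rabs_pos.
  set (amax := - eta * cmax).
  assert (Hamax : 0 < amax) by (unfold amax; nra).
  set (E := exp ((3 + 2 * amax + L) * X)).
  assert (HE : 0 < E) by apply exp_pos.
  set (Kc := 1 + (amax + eta * (1 + r))^2 + eta^2 * B^2).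
  assert (HKc : 1 <= Kc).
  { unfold Kc. assert (0 <= (amax + eta * (1 + r))^2) by apply pow2_ge_0.
    assert (0 <= eta^2 * B^2) by (apply Rmult_le_pos; apply pow2_ge_0). lra. }
  set (e1 := Rmin 1 (tau / (2 * E * Kc))).
  assert (He1 : 0 < e1) by (unfold e1; apply Rmin_glb_lt; [lra| apply Rdiv_lt_0_compat; nra]).
  assert (He11 : e1 <= 1) by apply Rmin_l.
  assert (He12 : e1 <= tau / (2 * E * Kc)) by apply Rmin_r.
  destruct (Hcont c Hc e1 He1) as [d1 [Hd1 Hd1']].
  exists (Rmin d1 e1). split. apply Rmin_glb_lt; auto.
  intros c' Hc' Hcc' x Hx.
  assert (Rmin d1 e1 <= d1) by apply Rmin_l. assert (Rmin d1 e1 <= e1) by apply Rmin_r.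
  destruct (Hsol c') as [Hf' [Hp' [Hf0' Hp0']]].
  set (a := -eta * c). set (a' := -eta * c').
  assert (Ha' : 0 <= a' <= amax) by (unfold a', amax; split; nra).
  assert (Ha : 0 <= a <= amax) by (unfold a, amax; split; nra).
  assert (Hdep := dep P L a a' (fst (sol c)) (snd (sol c)) (fst (sol c')) (snd (sol c')) X B HL (proj1 Ha') Hlip HX).
  assert (HD := Hdep (fun y Hy => HMb y Hy) (fun y _ => conj (Hf y) (Hp y)) (fun y _ => conj (Hf' y) (Hp' y)) x Hx).
  clear Hdep.
  rewrite Hf0, Hp0, Hf0', Hp0' in HD. fold a a' in HD.
  assert (HEx : exp ((3 + 2 * a' + L) * X) <= E).
  { unfold E. destruct (Req_dec X 0) as [->|HX0]. rewrite !Rmult_0_r. lra.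
    destruct (Req_dec a' amax) as [->|Hne]. lra. left. apply exp_increasing. nra. }
  set (u := ts c - ts c').
  assert (Hu : Rabs u < e1).
  { unfold u. rewrite <- Rabs_Ropp. replace (- (ts c - ts c')) with (ts c' - ts c) by ring.
    apply Hd1'; auto. lra. }
  assert (Hw : Rabs (c - c') < e1).
  { rewrite <- Rabs_Ropp. replace (- (c - c')) with (c' - c) by ring. lra. }
  assert (Haa : Rabs (a - a') <= eta * e1).
  { unfold a, a'. replace (-eta * c - -eta * c') with (-eta * (c - c')) by ring.
    rewrite Rabs_mult, Rabs_Ropp, (Rabs_right eta) by lra. apply Rmult_le_compat_l; lra. }
  assert (Hts' := Hrange c' Hc').
  assert (Hv : Rabs (a * (ts c + r) - a' * (ts c' + r)) <= e1 * (amax + eta * (1 + r))).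
  { replace (a * (ts c + r) - a' * (ts c' + r)) with (a * u + (a - a') * (ts c' + r)) by (unfold u; ring).
    eapply Rle_trans. apply Rabs_triang. rewrite !Rabs_mult.
    rewrite (Rabs_right a) by lra. rewrite (Rabs_right (ts c' + r)) by lra.
    assert (a * Rabs u <= amax * e1).
    { apply Rmult_le_compat; try lra. apply Rabs_pos. }
    assert (Rabs (a - a') * (ts c' + r) <= eta * e1 * (1 + r)).
    { apply Rmult_le_compat; try lra. apply Rabs_pos. }
    lra. }
  assert (S1 : u^2 <= e1) .
  { rewrite <- pow2_abs. assert (0 <= Rabs u) by apply Rabs_pos.
    apply Rle_trans with (e1 * e1). simpl. rewrite Rmult_1_r. apply Rmult_le_compat; lra. nra. }
  assert (S2 : (a * (ts c + r) - a' * (ts c' + r))^2 <= e1 * (amax + eta * (1 + r))^2).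
  { rewrite <- pow2_abs. assert (0 <= Rabs (a * (ts c + r) - a' * (ts c' + r))) by apply Rabs_pos.
    apply Rle_trans with ((e1 * (amax + eta * (1 + r)))^2). apply pow_incr; lra.
    assert (0 <= (amax + eta * (1 + r))^2) by apply pow2_ge_0.
    replace ((e1 * (amax + eta * (1 + r)))^2) with (e1 * e1 * (amax + eta * (1 + r))^2) by ring.
    apply Rmult_le_compat_r; auto. nra. }
  assert (S3 : (a - a')^2 * B^2 <= e1 * (eta^2 * B^2)).
  { rewrite <- pow2_abs. assert (0 <= Rabs (a - a')) by apply Rabs_pos.
    assert (Rabs (a - a') ^2 <= (eta * e1)^2) by (apply pow_incr; lra).
    assert (0 <= B^2) by apply pow2_ge_0.
    apply Rle_trans with ((eta * e1)^2 * B^2). apply Rmult_le_compat_r; auto.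
    replace ((eta * e1)^2 * B^2) with (e1 * (e1 * (eta^2 * B^2))) by ring.
    replace (e1 * (eta ^ 2 * B ^ 2)) with (1 * (e1 * (eta ^ 2 * B ^ 2))) at 2 by ring.
    apply Rmult_le_compat_r; [|lra]. apply Rmult_le_pos; [lra|]. apply Rmult_le_pos; apply pow2_ge_0. }
  assert (Ssum : u^2 + (a * (ts c + r) - a' * (ts c' + r))^2 + (a - a')^2 * B^2 <= e1 * Kc).
  { unfold Kc. lra. }
  fold u in HD.
  assert (HS0 : 0 <= u^2 + (a * (ts c + r) - a' * (ts c' + r))^2 + (a - a')^2 * B^2).
  { assert (0 <= u^2) by apply pow2_ge_0. assert (0 <= (a * (ts c + r) - a' * (ts c' + r))^2) by apply pow2_ge_0.
    assert (0 <= (a - a')^2 * B^2) by (apply Rmult_le_pos; apply pow2_ge_0). lra. }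
  eapply Rle_lt_trans. exact HD.
  apply Rle_lt_trans with (E * (e1 * Kc)).
  { apply Rmult_le_compat; auto. left; apply exp_pos. }
  apply Rle_lt_trans with (E * (tau / (2 * E * Kc) * Kc)).
  { apply Rmult_le_compat_l. lra. apply Rmult_le_compat_r; lra. }
  replace (E * (tau / (2 * E * Kc) * Kc)) with (tau / 2) by (field; lra). lra.
Qed.

Lemma shooting P L eta r cmax (ts : R -> R) :
  Pgood P L -> 0 < eta -> 0 < r -> cmax < 0 ->
  continuous_on_closed ts cmax 0 -> (forall c, cmax <= c <= 0 -> 0 <= ts c <= 1) ->
  strictly_decreasing_on ts cmax 0 -> ts 0 = 0 -> ts cmax = 1 ->
  exists c f p, cmax < c < 0 /\ (forall x, is_derive f x (p x)) /\
    (forall x, is_derive p x ((-eta*c) * p x - P (f x))) /\ f 0 = ts c /\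
    p 0 = (-eta*c) * (ts c + r) /\ (forall x, 0 <= x -> 0 < p x /\ f x < 1) /\
    is_lim f p_infty 1 /\ is_lim p p_infty 0.
Proof.
  intros HP Heta Hr Hcmax Hcont Hrange Hdecr Hts0 Htsm.
  pose proof HP as [HL [Hnn [Hpos [H1 Hlip]]]].
  set (sol := fun c => epsilon (inhabits ((fun _ : R => 0), (fun _ : R => 0)))
                (Qsol P (-eta*c) (ts c) ((-eta*c) * (ts c + r)))).
  assert (Hsol : forall c, Qsol P (-eta*c) (ts c) ((-eta*c) * (ts c + r)) (sol c)).
  { intros c. unfold sol. apply epsilon_spec. apply (Qsol_ex P L); auto. }
  clearbody sol.
  set (A := fun c => exists x, 0 <= x /\ snd (sol c) x < 0 /\ forall y, 0 <= y <= x -> fst (sol c) y < 1).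
  set (B := fun c => exists x, 0 <= x /\ 1 < fst (sol c) x /\ forall y, 0 <= y <= x -> 0 < snd (sol c) y).
  assert (Hcl := close_lemma P L eta r cmax ts sol HP Heta Hr Hcmax Hcont Hrange Hsol).
  assert (Cf : forall c x, continuity_pt (fst (sol c)) x).
  { intros c x. destruct (Hsol c) as [Hf _]. exact (der_cont _ _ _ (Hf x)). }
  assert (Cp : forall c x, continuity_pt (snd (sol c)) x).
  { intros c x. destruct (Hsol c) as [_ [Hp _]]. exact (der_cont _ _ _ (Hp x)). }
  assert (Hsplit : forall u v mu, 0 < mu -> u^2 + v^2 < mu^2 -> Rabs u < mu /\ Rabs v < mu).
  { intros u v mu Hmu H. assert (0 <= u^2) by apply pow2_ge_0. assert (0 <= v^2) by apply pow2_ge_0.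
    split; apply sq_lt_abs; auto; lra. }
  destruct (connect A B cmax 0) as [cs [Hcs [HnA HnB]]]; auto.
  -
    destruct (Hsol cmax) as [Hf [Hp [Hf0 Hp0]]].
    assert (Hp0pos : 0 < snd (sol cmax) 0) by (rewrite Hp0, Htsm; apply Rmult_lt_0_compat; [nra|lra]).
    destruct (cont_gt _ 0 0 (Cp cmax 0) Hp0pos) as [d [Hd Hd']].
    destruct (deriv_pos_right (fst (sol cmax)) 0 (snd (sol cmax) 0) d (Hf 0)) as [y [Hy1 Hy2]]; auto.
    exists y. split. lra. split. rewrite Hf0, Htsm in Hy2. lra.
    intros z Hz. apply Hd'. rewrite Rminus_0_r, Rabs_right; lra.
  -
    destruct (Hsol 0) as [Hf [Hp [Hf0 Hp0]]].
    rewrite Hts0 in Hf0, Hp0. replace (- eta * 0 * (0 + r)) with 0 in Hp0 by ring.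
    destruct (cont_lt _ 0 1 (Cf 0 0)) as [d [Hd Hd']]. rewrite Hf0; lra.
    destruct (deriv_neg_right (snd (sol 0)) 0 _ d (Hp 0)) as [y [Hy1 Hy2]]; auto.
    rewrite Hp0, Hf0. assert (0 < P 0) by (apply Hpos; lra). lra.
    exists y. split. lra. split. lra.
    intros z Hz. apply Hd'. rewrite Rminus_0_r, Rabs_right; lra.
  -
    intros c Hc [x [Hx [Hpx Hfx]]].
    destruct (cont_max_lt (fst (sol c)) x 1 Hx (Cf c) Hfx) as [mf [Hmf1 Hmf2]].
    set (mu := Rmin (- snd (sol c) x) (1 - mf)).
    assert (Hmu : 0 < mu) by (unfold mu; apply Rmin_glb_lt; lra).
    assert (Hmu1 : mu <= - snd (sol c) x) by apply Rmin_l. assert (Hmu2 : mu <= 1 - mf) by apply Rmin_r.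
    destruct (Hcl c Hc x Hx (mu^2) ltac:(nra)) as [d [Hd Hd']].
    exists d. split; auto. intros c' Hc' Hcc'.
    exists x. split; auto. split.
    + destruct (Hsplit _ _ mu Hmu (Hd' c' Hc' Hcc' x ltac:(lra))) as [_ Hq].
      apply Rabs_def2 in Hq. lra.
    + intros y Hy. destruct (Hsplit _ _ mu Hmu (Hd' c' Hc' Hcc' y Hy)) as [Hq _].
      apply Rabs_def2 in Hq. specialize (Hmf2 y Hy). lra.
  -
    intros c Hc [x [Hx [Hfx Hpx]]].
    destruct (cont_min_gt (snd (sol c)) x 0 Hx (Cp c) Hpx) as [mp [Hmp1 Hmp2]].
    set (mu := Rmin (fst (sol c) x - 1) mp).
    assert (Hmu : 0 < mu) by (unfold mu; apply Rmin_glb_lt; lra).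
    assert (Hmu1 : mu <= fst (sol c) x - 1) by apply Rmin_l. assert (Hmu2 : mu <= mp) by apply Rmin_r.
    destruct (Hcl c Hc x Hx (mu^2) ltac:(nra)) as [d [Hd Hd']].
    exists d. split; auto. intros c' Hc' Hcc'.
    exists x. split; auto. split.
    + destruct (Hsplit _ _ mu Hmu (Hd' c' Hc' Hcc' x ltac:(lra))) as [Hq _].
      apply Rabs_def2 in Hq. lra.
    + intros y Hy. destruct (Hsplit _ _ mu Hmu (Hd' c' Hc' Hcc' y Hy)) as [_ Hq].
      apply Rabs_def2 in Hq. specialize (Hmp2 y Hy). lra.
  -
    intros c Hc [x1 [Hx1 [Hpx1 Hf1]]] [x2 [Hx2 [Hfx2 Hp2]]].
    destruct (Rle_dec x2 x1).
    + specialize (Hf1 x2 ltac:(lra)). lra.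
    + specialize (Hp2 x1 ltac:(lra)). lra.
  -
    assert (Hcs1 : cs <> cmax).
    { intros E. subst cs. apply HnB.
      destruct (Hsol cmax) as [Hf [Hp [Hf0 Hp0]]].
      assert (Hp0pos : 0 < snd (sol cmax) 0) by (rewrite Hp0, Htsm; apply Rmult_lt_0_compat; [nra|lra]).
      destruct (cont_gt _ 0 0 (Cp cmax 0) Hp0pos) as [d [Hd Hd']].
      destruct (deriv_pos_right (fst (sol cmax)) 0 (snd (sol cmax) 0) d (Hf 0)) as [y [Hy1 Hy2]]; auto.
      exists y. split. lra. split. rewrite Hf0, Htsm in Hy2. lra.
      intros z Hz. apply Hd'. rewrite Rminus_0_r, Rabs_right; lra. }
    assert (Hcs2 : cs <> 0).
    { intros E. subst cs. apply HnA.
      destruct (Hsol 0) as [Hf [Hp [Hf0 Hp0]]].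
      rewrite Hts0 in Hf0, Hp0. replace (- eta * 0 * (0 + r)) with 0 in Hp0 by ring.
      destruct (cont_lt _ 0 1 (Cf 0 0)) as [d [Hd Hd']]. rewrite Hf0; lra.
      destruct (deriv_neg_right (snd (sol 0)) 0 _ d (Hp 0)) as [y [Hy1 Hy2]]; auto.
      rewrite Hp0, Hf0. assert (0 < P 0) by (apply Hpos; lra). lra.
      exists y. split. lra. split. lra.
      intros z Hz. apply Hd'. rewrite Rminus_0_r, Rabs_right; lra. }
    assert (Hcs' : cmax < cs < 0) by lra.
    assert (Hts1 : ts cs < 1) by (rewrite <- Htsm; apply Hdecr; lra).
    assert (Hts2 : 0 < ts cs) by (rewrite <- Hts0; apply Hdecr; lra).
    destruct (Hsol cs) as [Hf [Hp [Hf0 Hp0]]].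
    exists cs, (fst (sol cs)), (snd (sol cs)).
    assert (Ha : 0 < - eta * cs) by nra.
    assert (Hcl2 := classify P L (-eta*cs) (fst (sol cs)) (snd (sol cs)) HP ltac:(lra) Hf Hp
      ltac:(rewrite Hf0; lra) ltac:(rewrite Hp0; apply Rmult_lt_0_compat; lra) HnA HnB).
    assert (Hlim := limits_lemma P L (-eta*cs) (fst (sol cs)) (snd (sol cs)) HP Ha Hf Hp ltac:(rewrite Hf0; lra) Hcl2).
    split. lra. split. exact Hf. split. exact Hp. split. exact Hf0. split. exact Hp0. split. exact Hcl2. exact Hlim.
Qed.

Lemma exp_small k e : 0 < k -> 0 < e -> exists M, forall x, x < M -> exp (k * x) < e.
Proof.
  intros Hk He. exists (ln e / k). intros x Hx.
  rewrite <- (exp_ln e He). apply exp_increasing.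
  apply Rmult_lt_reg_r with (/ k). apply Rinv_0_lt_compat; lra.
  replace (k * x * / k) with x by (field; lra). exact Hx.
Qed.

Lemma solid c th thm : c <= 0 -> C2 thm ->
  (forall x, x < 0 -> Derive (Derive thm) x + c * Derive thm x = 0) ->
  (forall x, x <= 0 -> 0 <= thm x <= 1) -> is_lim thm m_infty 0 -> thm 0 = th ->
  Derive thm 0 = - c * th.
Proof.
  intros Hc HC2 Hode Hr Hlim H0.
  set (q := Derive thm).
  assert (Hd : forall x, is_derive thm x (q x)) by (intros x; apply Derive_correct, HC2).
  assert (Hq : forall x, is_derive q x (Derive q x)) by (intros x; apply Derive_correct, HC2).
  assert (Cq : forall x, continuity_pt q x) by (intros x; exact (der_cont _ _ _ (Hq x))).
  assert (CDq : continuity_pt (Derive q) 0) by (apply continuity_pt_filterlim; apply HC2).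
  assert (Hode0 : Derive q 0 + c * q 0 = 0).
  { apply (eq_side_cont (fun x => Derive q x + c * q x) (fun _ => 0) 0 (-1)). lra.
    apply continuity_pt_plus; auto. apply continuity_pt_scal; auto.
    apply continuity_pt_const; intros u v; auto.
    intros t Ht. apply Hode. lra. }
  assert (HODE : forall x, x <= 0 -> Derive q x = - c * q x).
  { intros x Hx. destruct (Req_dec x 0) as [->|]. lra. specialize (Hode x ltac:(lra)). fold q in Hode. lra. }
  set (q0 := q 0).
  assert (Hh : forall x, x <= 0 -> exp (c * x) * q x = q0).
  { intros x Hx.
    assert (Hder : forall y, x <= y <= 0 -> is_derive (fun z => exp (c * z) * q z) y (exp (c*y) * (c * q y + Derive q y))).
    { intros y Hy. auto_derive. exists (Derive q y); auto. derf q y (Derive q y) (Hq y). ring. }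
    assert (Hz : forall y, x < y < 0 -> exp (c*y) * (c * q y + Derive q y) = 0).
    { intros y Hy. rewrite HODE by lra. ring. }
    apply Rle_antisym.
    - replace q0 with (exp (c * 0) * q 0) by (rewrite Rmult_0_r, exp_0; unfold q0; ring).
      apply (mono_deriv (fun z => exp (c * z) * q z) _ x 0 Hx Hder). intros y Hy; rewrite Hz; lra.
    - replace q0 with (exp (c * 0) * q 0) by (rewrite Rmult_0_r, exp_0; unfold q0; ring).
      apply (anti_deriv (fun z => exp (c * z) * q z) _ x 0 Hx Hder). intros y Hy; rewrite Hz; lra. }
  assert (Hqx : forall x, x <= 0 -> q x = q0 * exp (- c * x)).
  { intros x Hx. rewrite <- (Hh x Hx).
    assert (E : exp (c*x) * exp (-c*x) = 1) by (rewrite <- exp_plus; replace (c * x + - c * x) with 0 by ring; apply exp_0).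
    replace (exp (c * x) * q x * exp (- c * x)) with (q x * (exp (c*x) * exp (-c*x))) by ring.
    rewrite E. ring. }
  fold q. fold q0. 
  destruct (Req_dec c 0) as [Hc0|Hcn].
  - subst c. assert (Hq0 : q0 = 0).
    { assert (HG : forall x, x <= 0 -> thm x - q0 * x = th).
      { intros x Hx. rewrite <- H0.
        assert (Hder : forall y, x <= y <= 0 -> is_derive (fun z => thm z - q0 * z) y (q y - q0)).
        { intros y Hy. auto_derive. exists (q y); auto. derf thm y (q y) (Hd y). ring. }
        assert (Hz : forall y, x < y < 0 -> q y - q0 = 0).
        { intros y Hy. rewrite Hqx by lra. replace (-0 * y) with 0 by ring. rewrite exp_0. ring. }
        replace (thm 0) with (thm 0 - q0 * 0) by ring.
        apply Rle_antisym.
        - apply (mono_deriv _ _ x 0 Hx Hder). intros y Hy; rewrite Hz; lra.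
        - apply (anti_deriv _ _ x 0 Hx Hder). intros y Hy; rewrite Hz; lra. }
      assert (Hth : 0 <= th <= 1) by (rewrite <- H0; apply Hr; lra).
      destruct (Rtotal_order q0 0) as [Hn|[Hz|Hp]]; auto; exfalso.
      + assert (Hi : / q0 < 0) by (apply Rinv_lt_0_compat; lra).
        set (x := 2 / q0). assert (Hx : x < 0) by (unfold x, Rdiv; nra).
        specialize (HG x ltac:(lra)). assert (q0 * x = 2) by (unfold x; field; lra).
        specialize (Hr x ltac:(lra)). lra.
      + assert (Hi : 0 < / q0) by (apply Rinv_0_lt_compat; lra).
        set (x := - 2 / q0). assert (Hx : x < 0) by (unfold x, Rdiv; nra).
        specialize (HG x ltac:(lra)). assert (q0 * x = -2) by (unfold x; field; lra).
        specialize (Hr x ltac:(lra)). lra. }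
    rewrite Hq0. ring.
  - assert (Hcneg : c < 0) by lra.
    assert (HG : forall x, x <= 0 -> thm x + q0 * exp (- c * x) / c = th + q0 / c).
    { intros x Hx. rewrite <- H0.
      assert (Hder : forall y, x <= y <= 0 -> is_derive (fun z => thm z + q0 * exp (- c * z) / c) y (q y - q0 * exp (- c * y))).
      { intros y Hy. auto_derive. exists (q y); auto. derf thm y (q y) (Hd y). field. lra. }
      assert (Hz : forall y, x < y < 0 -> q y - q0 * exp (- c * y) = 0).
      { intros y Hy. rewrite Hqx by lra. ring. }
      replace (thm 0 + q0 / c) with (thm 0 + q0 * exp (- c * 0) / c) by (rewrite Rmult_0_r, exp_0; field; lra).
      apply Rle_antisym.
      - apply (mono_deriv _ _ x 0 Hx Hder). intros y Hy; rewrite Hz; lra.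
      - apply (anti_deriv _ _ x 0 Hx Hder). intros y Hy; rewrite Hz; lra. }
    assert (Hlim0 : th + q0 / c = 0).
    { apply Rabs_eps_eq. intros e He.
      set (A := Rabs (q0 / c) + 1). assert (HA : 1 <= A) by (unfold A; assert (0 <= Rabs (q0/c)) by apply Rabs_pos; lra).
      destruct (lim_m_elim thm 0 Hlim (e/2) ltac:(lra)) as [M1 HM1].
      destruct (exp_small (-c) (e / (2*A)) ltac:(lra) ltac:(apply Rdiv_lt_0_compat; lra)) as [M2 HM2].
      set (x := Rmin (Rmin M1 M2) 0 - 1).
      assert (Hx1 : x < M1) by (unfold x; assert (Rmin (Rmin M1 M2) 0 <= Rmin M1 M2) by apply Rmin_l; assert (Rmin M1 M2 <= M1) by apply Rmin_l; lra).
      assert (Hx2 : x < M2) by (unfold x; assert (Rmin (Rmin M1 M2) 0 <= Rmin M1 M2) by apply Rmin_l; assert (Rmin M1 M2 <= M2) by apply Rmin_r; lra).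
      assert (Hx3 : x < 0) by (unfold x; assert (Rmin (Rmin M1 M2) 0 <= 0) by apply Rmin_r; lra).
      rewrite Rminus_0_r. rewrite <- (HG x ltac:(lra)).
      specialize (HM1 x Hx1). rewrite Rminus_0_r in HM1. specialize (HM2 x Hx2).
      assert (Hex : 0 < exp (-c * x)) by apply exp_pos.
      replace (q0 * exp (- c * x) / c) with (q0 / c * exp (- c * x)) by (field; lra).
      eapply Rle_lt_trans. apply Rabs_triang. rewrite Rabs_mult, (Rabs_right (exp (-c*x))) by lra.
      assert (Rabs (q0 / c) * exp (- c * x) <= A * (e / (2*A))).
      { apply Rmult_le_compat. apply Rabs_pos. lra. unfold A; lra. lra. }
      assert (A * (e / (2*A)) = e/2) by (field; lra). lra. }
    assert (q0 = - c * th) by (apply Rmult_eq_reg_r with (/ c); [| apply Rinv_neq_0_compat; lra];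
       replace (- c * th * / c) with (- th) by (field; lra); unfold Rdiv in Hlim0; lra).
    lra.
Qed.

Lemma GT_zero P L r f p : Pgood P L -> GT P 0 r 0 f p -> False.
Proof.
  intros [HL [Hnn [Hpos [H1 Hlip]]]] [Hf [Hp [H0 [Hp0 [Hr [Hlf Hlp]]]]]].
  rewrite Rmult_0_l in Hp0.
  assert (Hpn : forall x, 0 <= x -> p x <= 0).
  { intros x Hx. rewrite <- Hp0. apply (anti_deriv p (fun y => 0 * p y - P (f y))); auto.
    intros y Hy. apply Hp; lra. intros y Hy. specialize (Hnn (f y)). lra. }
  assert (Hfn : forall x, 0 <= x -> f x <= 0).
  { intros x Hx. rewrite <- H0. apply (anti_deriv f p); auto. intros y Hy; apply Hpn; lra. }
  destruct (lim_eventually f 1 Hlf (1/2) ltac:(lra) 0) as [x [Hx1 Hx2]].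
  apply Rabs_def2 in Hx2. specialize (Hfn x ltac:(lra)). lra.
Qed.

Lemma GT_one P L a r f p : Pgood P L -> 0 < a -> 0 <= r -> GT P a r 1 f p -> False.
Proof.
  intros [HL [Hnn [Hpos [H1 Hlip]]]] Ha Hr0 [Hf [Hp [H0 [Hp0 [Hr [Hlf Hlp]]]]]].
  assert (Hp0pos : 0 < p 0) by (rewrite Hp0; apply Rmult_lt_0_compat; lra).
  destruct (cont_gt p 0 0 (der_cont _ _ _ (Hp 0 (Rle_refl 0))) Hp0pos) as [d [Hd Hd']].
  assert (f 0 < f (d/2)).
  { apply (smono_deriv f p). lra. intros; apply Hf. intros y Hy. apply Hd'. rewrite Rminus_0_r, Rabs_right; lra. }
  specialize (Hr (d/2) ltac:(lra)). lra.
Qed.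

Lemma extract eta Qg Qp Psi Psie L ts c theta :
  (forall x, 0 <= x <= 1 -> Psie x = Psi x) -> Pgood (Pt Psie) L -> Qp + Qg <> 0 -> c <= 0 ->
  Pc_solution eta Qg Qp Psi ts c theta ->
  exists f p, GT (Pt Psie) (-eta*c) (- Qp / (Qp + Qg)) (ts c) f p.
Proof.
  intros Heq HP HQ Hc [Hr [Hcont [thm [thp [C2m [C2p [Em [Ep [Om [Op [Lm [T0 [Lp [LDm [LDp Hheat]]]]]]]]]]]]]]].
  pose proof HP as [HL [Hnn [Hpos [H1 Hlip]]]].
  assert (HPc : forall u, continuity_pt (Pt Psie) u) by (apply (lip_cont _ L); auto).
  assert (Hthm0 : thm 0 = ts c) by (rewrite Em by lra; auto).
  assert (Dm : Derive thm 0 = - c * ts c).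
  { apply (solid c (ts c) thm Hc C2m Om).
    - intros x Hx. rewrite Em by auto. apply Hr.
    - apply lim_m_intro. intros e He. destruct (lim_m_elim theta 0 Lm e He) as [M HM].
      exists (Rmin M 0). intros x Hx. assert (Rmin M 0 <= M) by apply Rmin_l. assert (Rmin M 0 <= 0) by apply Rmin_r.
      rewrite Em by lra. apply HM. lra.
    - auto. }
  exists thp, (Derive thp).
  assert (Hd : forall x, is_derive thp x (Derive thp x)) by (intros x; apply Derive_correct, C2p).
  assert (Hdd : forall x, is_derive (Derive thp) x (Derive (Derive thp) x)) by (intros x; apply Derive_correct, C2p).
  assert (Hrng : forall x, 0 <= x -> 0 <= thp x <= 1) by (intros x Hx; rewrite Ep by auto; apply Hr).
  assert (Hode : forall x, 0 < x -> Derive (Derive thp) x = (-eta*c) * Derive thp x - Pt Psie (thp x)).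
  { intros x Hx. specialize (Op x Hx). rewrite (Pt_eq Psi Psie Heq) by (apply Hrng; lra). rewrite Ep by lra. lra. }
  split; [|split; [|split; [|split; [|split; [|split]]]]].
  - exact Hd.
  - intros x Hx. destruct (Req_dec x 0) as [->|Hx0].
    + replace ((-eta*c) * Derive thp 0 - Pt Psie (thp 0)) with (Derive (Derive thp) 0). apply Hdd.
      apply (eq_side_cont (Derive (Derive thp)) (fun x => (-eta*c) * Derive thp x - Pt Psie (thp x)) 0 1). lra.
      apply continuity_pt_filterlim. apply C2p.
      apply continuity_pt_minus. apply continuity_pt_scal. exact (der_cont _ _ _ (Hdd 0)).
      apply (continuity_pt_comp thp (Pt Psie)). exact (der_cont _ _ _ (Hd 0)). apply HPc.
      intros t Ht. apply Hode. lra.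
    + rewrite <- (Hode x) by lra. apply Hdd.
  - rewrite Ep by lra. auto.
  - assert (E := Hheat). unfold S_heat in E. rewrite Dm in E.
    replace (Derive thp 0) with (eta * (Qp / (Qp + Qg)) * c + eta * (- c * ts c)) by lra.
    field. auto.
  - exact Hrng.
  - apply lim_p_intro. intros e He. destruct (lim_p_elim theta 1 Lp e He) as [M HM].
    exists (Rmax M 0). intros x Hx. assert (M <= Rmax M 0) by apply Rmax_l. assert (0 <= Rmax M 0) by apply Rmax_r.
    rewrite Ep by lra. apply HM. lra.
  - exact LDp.
Qed.

Lemma piece_cont g1 g2 : (forall x, continuity_pt g1 x) -> (forall x, continuity_pt g2 x) -> g1 0 = g2 0 ->
  forall x, continuous (fun y => if Rle_dec y 0 then g1 y else g2 y) x.
Proof.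
  intros C1 C2 E x. apply cpt_cont. apply cont_intro. intros e He.
  destruct (cont_eps g1 x (C1 x) e He) as [d1 [Hd1 Hd1']].
  destruct (cont_eps g2 x (C2 x) e He) as [d2 [Hd2 Hd2']].
  destruct (Rtotal_order x 0) as [Hx|[Hx|Hx]].
  - exists (Rmin d1 (-x)). split. apply Rmin_glb_lt; lra.
    intros y Hy. assert (Rmin d1 (-x) <= d1) by apply Rmin_l. assert (Rmin d1 (-x) <= -x) by apply Rmin_r.
    apply Rabs_def2 in Hy.
    destruct (Rle_dec y 0); [|lra]. destruct (Rle_dec x 0); [|lra]. apply Hd1'. apply Rabs_def1; lra.
  - subst x. exists (Rmin d1 d2). split. apply Rmin_glb_lt; lra.
    intros y Hy. assert (Rmin d1 d2 <= d1) by apply Rmin_l. assert (Rmin d1 d2 <= d2) by apply Rmin_r.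
    destruct (Rle_dec 0 0); [|lra].
    destruct (Rle_dec y 0). apply Hd1'. lra. rewrite E. apply Hd2'. lra.
  - exists (Rmin d2 x). split. apply Rmin_glb_lt; lra.
    intros y Hy. assert (Rmin d2 x <= d2) by apply Rmin_l. assert (Rmin d2 x <= x) by apply Rmin_r.
    apply Rabs_def2 in Hy.
    destruct (Rle_dec y 0); [lra|]. destruct (Rle_dec x 0); [lra|]. apply Hd2'. apply Rabs_def1; lra.
Qed.

Lemma in_open eta Qg Qp Psi Psie L ts cmax c :
  (forall x, 0 <= x <= 1 -> Psie x = Psi x) -> Pgood (Pt Psie) L -> 0 < eta -> 0 < Qg -> - Qg < Qp -> Qp < 0 ->
  cmax < 0 -> ts 0 = 0 -> ts cmax = 1 -> cmax <= c <= 0 ->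
  Pc_solvable eta Qg Qp Psi ts c ->
  cmax < c < 0 /\ exists f p, GT (Pt Psie) (-eta*c) (- Qp / (Qp + Qg)) (ts c) f p.
Proof.
  intros Heq HP Heta HQg HQ1 HQ2 Hcmax Hts0 Htsm Hc [theta Hsol].
  assert (Hr : 0 < - Qp / (Qp + Qg)) by (apply Rdiv_lt_0_compat; lra).
  destruct (extract eta Qg Qp Psi Psie L ts c theta Heq HP ltac:(lra) ltac:(lra) Hsol) as [f [p HG]].
  split; [|exists f, p; exact HG].
  split.
  - destruct (Req_dec c cmax) as [E|]; [|lra]. exfalso. subst c. rewrite Htsm in HG.
    assert (Ha : 0 < -eta*cmax) by (replace (-eta*cmax) with (eta * (-cmax)) by ring; apply Rmult_lt_0_compat; lra).
    apply (GT_one _ L _ _ f p HP Ha (Rlt_le _ _ Hr) HG).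
  - destruct (Req_dec c 0) as [E|]; [|lra]. exfalso. subst c. rewrite Hts0 in HG.
    replace (-eta*0) with 0 in HG by ring. apply (GT_zero _ L _ f p HP HG).
Qed.

Lemma uniq_c eta Qg Qp Psi Psie L ts cmax c1 c2 :
  (forall x, 0 <= x <= 1 -> Psie x = Psi x) -> Pgood (Pt Psie) L -> 0 < eta -> 0 < Qg -> - Qg < Qp -> Qp < 0 ->
  cmax < 0 -> (forall c, cmax <= c <= 0 -> 0 <= ts c <= 1) -> strictly_decreasing_on ts cmax 0 ->
  ts 0 = 0 -> ts cmax = 1 -> cmax <= c1 <= 0 -> cmax <= c2 <= 0 ->
  Pc_solvable eta Qg Qp Psi ts c1 -> Pc_solvable eta Qg Qp Psi ts c2 -> c1 = c2.
Proof.
  intros Heq HP Heta HQg HQ1 HQ2 Hcmax Hrange Hdecr Hts0 Htsm Hc1 Hc2 S1 S2.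
  assert (Hr : 0 < - Qp / (Qp + Qg)) by (apply Rdiv_lt_0_compat; lra).
  destruct (in_open eta Qg Qp Psi Psie L ts cmax c1 Heq HP Heta HQg HQ1 HQ2 Hcmax Hts0 Htsm Hc1 S1) as [O1 [f1 [p1 G1]]].
  destruct (in_open eta Qg Qp Psi Psie L ts cmax c2 Heq HP Heta HQg HQ1 HQ2 Hcmax Hts0 Htsm Hc2 S2) as [O2 [f2 [p2 G2]]].
  assert (Hneg : forall u v, u < v -> -eta * v < -eta * u).
  { intros u v Huv. assert (0 < eta * (v - u)) by (apply Rmult_lt_0_compat; lra). lra. }
  assert (Hpos : forall u, u < 0 -> 0 < -eta * u).
  { intros u Hu. replace (-eta*u) with (eta * (-u)) by ring. apply Rmult_lt_0_compat; lra. }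
  destruct (Rtotal_order c1 c2) as [Hlt|[Heq12|Hgt]]; auto; exfalso.
  - assert (ts c2 < ts c1) by (apply Hdecr; lra).
    assert (ts c1 < 1) by (rewrite <- Htsm; apply Hdecr; lra).
    assert (0 <= ts c2) by (apply Hrange; lra).
    apply (compare _ L (-eta*c1) (-eta*c2) _ (ts c1) (ts c2) f1 p1 f2 p2 HP (Rlt_le _ _ Hr) (Hpos c2 ltac:(lra)) (Hneg c1 c2 Hlt)); auto.
  - assert (ts c1 < ts c2) by (apply Hdecr; lra).
    assert (ts c2 < 1) by (rewrite <- Htsm; apply Hdecr; lra).
    assert (0 <= ts c1) by (apply Hrange; lra).
    apply (compare _ L (-eta*c2) (-eta*c1) _ (ts c2) (ts c1) f2 p2 f1 p1 HP (Rlt_le _ _ Hr) (Hpos c1 ltac:(lra)) (Hneg c2 c1 Hgt)); auto.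
Qed.

Lemma build eta Qg Qp Psi Psie L ts cmax :
  (forall x, 0 <= x <= 1 -> Psie x = Psi x) -> Pgood (Pt Psie) L -> 0 < eta -> 0 < Qg -> - Qg < Qp -> Qp < 0 ->
  cmax < 0 -> continuous_on_closed ts cmax 0 -> (forall c, cmax <= c <= 0 -> 0 <= ts c <= 1) ->
  strictly_decreasing_on ts cmax 0 -> ts 0 = 0 -> ts cmax = 1 ->
  exists c, cmax <= c <= 0 /\ Pc_solvable eta Qg Qp Psi ts c.
Proof.
  intros Heq HP Heta HQg HQ1 HQ2 Hcmax Hcont Hrange Hdecr Hts0 Htsm.
  set (r := - Qp / (Qp + Qg)).
  assert (Hr : 0 < r) by (apply Rdiv_lt_0_compat; lra).
  destruct (shooting (Pt Psie) L eta r cmax ts HP Heta Hr Hcmax Hcont Hrange Hdecr Hts0 Htsm)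
    as [c [f [p [Hc [Hf [Hp [Hf0 [Hp0 [Hpf [Lf Lp]]]]]]]]]].
  pose proof HP as [HL [Hnn [Hpos [H1 Hlip]]]].
  assert (HPc : forall u, continuity_pt (Pt Psie) u) by (apply (lip_cont _ L); auto).
  assert (Hts : 0 <= ts c <= 1) by (apply Hrange; lra).
  assert (Hfr : forall x, 0 <= x -> 0 <= f x < 1).
  { intros x Hx. split; [|apply Hpf; auto].
    destruct (Req_dec x 0) as [->|]. lra.
    assert (f 0 < f x). { apply (smono_deriv f p). lra. intros; apply Hf. intros y Hy; apply Hpf; lra. }
    lra. }
  set (thm := fun x => ts c * exp (- c * x)).
  set (theta := fun x => if Rle_dec x 0 then thm x else f x).
  exists c. split; [lra|]. exists theta.
  assert (D1 : Derive thm = fun x => - c * ts c * exp (- c * x)).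
  { apply functional_extensionality. intros x. apply is_derive_unique. unfold thm. auto_derive; auto. ring. }
  assert (D2 : Derive (fun x => - c * ts c * exp (- c * x)) = fun x => c * c * ts c * exp (- c * x)).
  { apply functional_extensionality. intros x. apply is_derive_unique. auto_derive; auto. ring. }
  assert (Dp1 : Derive f = p).
  { apply functional_extensionality. intros x. apply is_derive_unique. apply Hf. }
  assert (Dp2 : Derive p = fun x => (-eta*c) * p x - Pt Psie (f x)).
  { apply functional_extensionality. intros x. apply is_derive_unique. apply Hp. }
  assert (Cp : forall x, continuity_pt p x) by (intros x; exact (der_cont _ _ _ (Hp x))).
  assert (Cf : forall x, continuity_pt f x) by (intros x; exact (der_cont _ _ _ (Hf x))).
  assert (Cthm : forall x, continuity_pt thm x).
  { intros x. apply continuity_pt_filterlim. apply (ex_derive_continuous thm). unfold thm. auto_derive; auto. }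
  assert (Hthm0 : thm 0 = ts c) by (unfold thm; rewrite Rmult_0_r, exp_0; ring).
  assert (Hexp : forall x, x <= 0 -> 0 < exp (- c * x) <= 1).
  { intros x Hx. split. apply exp_pos. rewrite <- exp_0.
    destruct (Rtotal_order x 0) as [Hlt|[->|Hgt]]. left; apply exp_increasing.
    assert (0 < (-c) * (-x)) by (apply Rmult_lt_0_compat; lra). lra.
    rewrite Rmult_0_r; lra. lra. }
  unfold Pc_solution. split; [|split].
  - intros x. unfold theta. destruct (Rle_dec x 0).
    + unfold thm. specialize (Hexp x r0). split. apply Rmult_le_pos; lra.
      apply Rle_trans with (1 * 1). apply Rmult_le_compat; lra. lra.
    + specialize (Hfr x ltac:(lra)). lra.
  - apply piece_cont; auto. rewrite Hthm0, Hf0. auto.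
  - exists thm, f.
    split; [|split; [|split; [|split; [|split; [|split; [|split; [|split; [|split; [|split; [|split]]]]]]]]]].
    + intros x. split. unfold thm; auto_derive; auto. split. rewrite D1. auto_derive; auto.
      rewrite D1, D2. apply (ex_derive_continuous (fun x => c * c * ts c * exp (- c * x))). auto_derive; auto.
    + intros x. split. exists (p x); apply Hf. split. rewrite Dp1. exists ((-eta*c) * p x - Pt Psie (f x)); apply Hp.
      rewrite Dp1, Dp2. apply cpt_cont. apply continuity_pt_minus. apply continuity_pt_scal; auto.
      apply (continuity_pt_comp f (Pt Psie)); auto.
    + intros x Hx. unfold theta. destruct (Rle_dec x 0); [auto|lra].
    + intros x Hx. unfold theta. destruct (Rle_dec x 0); [|auto].
      assert (x = 0) by lra. subst x. rewrite Hthm0, Hf0. auto.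
    + intros x Hx. rewrite D1, D2. ring.
    + intros x Hx. rewrite Dp1, Dp2. unfold theta. destruct (Rle_dec x 0); [lra|].
      rewrite <- (Pt_eq Psi Psie Heq) by (specialize (Hfr x ltac:(lra)); lra). ring.
    + apply lim_m_intro. intros e He.
      destruct (exp_small (-c) (Rmin e 1) ltac:(lra) ltac:(apply Rmin_glb_lt; lra)) as [M HM].
      exists (Rmin M 0). intros x Hx. assert (Rmin M 0 <= M) by apply Rmin_l. assert (Rmin M 0 <= 0) by apply Rmin_r.
      unfold theta. destruct (Rle_dec x 0); [|lra]. unfold thm. rewrite Rminus_0_r.
      specialize (HM x ltac:(lra)). assert (Rmin e 1 <= e) by apply Rmin_l.
      specialize (Hexp x r0). rewrite Rabs_right by (apply Rle_ge, Rmult_le_pos; lra).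
      replace (- c * x) with (- c * x) by ring.
      apply Rle_lt_trans with (1 * exp (- c * x)). apply Rmult_le_compat_r; lra. lra.
    + unfold theta. destruct (Rle_dec 0 0); [|lra]. auto.
    + apply lim_p_intro. intros e He. destruct (lim_p_elim f 1 Lf e He) as [M HM].
      exists (Rmax M 0). intros x Hx. assert (M <= Rmax M 0) by apply Rmax_l. assert (0 <= Rmax M 0) by apply Rmax_r.
      unfold theta. destruct (Rle_dec x 0); [lra|]. apply HM. lra.
    + rewrite D1. apply lim_m_intro. intros e He.
      set (A := Rabs c * ts c + 1). assert (HA : 1 <= A) by (unfold A; assert (0 <= Rabs c * ts c) by (apply Rmult_le_pos; [apply Rabs_pos|lra]); lra).
      destruct (exp_small (-c) (e / A) ltac:(lra) ltac:(apply Rdiv_lt_0_compat; lra)) as [M HM].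
      exists M. intros x Hx. rewrite Rminus_0_r. specialize (HM x Hx).
      assert (0 < exp (- c * x)) by apply exp_pos.
      rewrite Rabs_mult, (Rabs_right (exp (-c*x))) by lra.
      rewrite Rabs_mult, Rabs_Ropp, (Rabs_right (ts c)) by lra.
      apply Rle_lt_trans with (A * exp (- c * x)). apply Rmult_le_compat_r; unfold A; lra.
      apply Rlt_le_trans with (A * (e / A)). apply Rmult_lt_compat_l; lra. right; field; lra.
    + rewrite Dp1. exact Lp.
    + rewrite Dp1, D1. rewrite Hp0. unfold S_heat. rewrite Rmult_0_r, exp_0. unfold r. field. lra.
Qed.

Theorem proposition7
  (eta Qg Qp : R) (Psi : R -> R) (c_max : R) (theta_s : R -> R)
  (Heta : 0 < eta) (HQg : 0 < Qg)
  (HQp1 : - Qg < Qp) (HQp2 : Qp < 0)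
  (HPsi_smooth : exists Psie : R -> R, smooth Psie /\
                   forall x, 0 <= x <= 1 -> Psie x = Psi x)
  (HPsi_nonneg : forall x, 0 <= x <= 1 -> 0 <= Psi x)
  (HPsi_pos : forall x, 0 <= x < 1 -> 0 < Psi x)
  (HPsi1 : Psi 1 = 0)
  (Hcmax : c_max < 0)
  (Hts_range : forall c, c_max <= c <= 0 -> 0 <= theta_s c <= 1)
  (Hts_cont : continuous_on_closed theta_s c_max 0)
  (Hts_decr : strictly_decreasing_on theta_s c_max 0)
  (Hts0 : theta_s 0 = 0)
  (Hts_cmax : theta_s c_max = 1)
  (Hts_smooth : exists g : R -> R, smooth_neg g /\
                  (forall c, c_max <= c < 0 -> g c = theta_s c) /\
                  (forall c, c_max <= c < 0 -> Derive g c < 0)) :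
  exists! c : R, c_max <= c <= 0 /\ Pc_solvable eta Qg Qp Psi theta_s c.
Proof.
  destruct HPsi_smooth as [Psie [Hsm Heq]].
  destruct (Pt_lip Psie Hsm) as [L [HL Hlip]].
  assert (HP : Pgood (Pt Psie) L).
  { split; auto. split. intros u; apply (Pt_nonneg Psi Psie Heq HPsi_nonneg).
    split. intros u Hu; apply (Pt_pos Psi Psie Heq HPsi_pos); auto.
    split. rewrite (Pt_eq Psi Psie Heq) by lra. auto. auto. }
  destruct (build eta Qg Qp Psi Psie L theta_s c_max Heq HP Heta HQg HQp1 HQp2 Hcmax Hts_cont Hts_range Hts_decr Hts0 Hts_cmax)
    as [c [Hc Hs]].
  exists c. split. split; auto.
  intros c' [Hc' Hs'].
  apply (uniq_c eta Qg Qp Psi Psie L theta_s c_max c c' Heq HP Heta HQg HQp1 HQp2 Hcmax Hts_range Hts_decr Hts0 Hts_cmax Hc Hc' Hs Hs').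
Qed.
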